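(* For all complex $q$ with $|q|<1$, $$F^{\rm ed}_{\rm ou}(-q)=-\frac{(-q^2;q^2)_\infty}{2}\left(2-\frac{1}{(-q;q)_\infty}-\frac{2}{(q;q)_\infty}\sum_{n\in\mathbb Z}\frac{(-1)^n q^{\frac{3n(n+1)}{2}}}{1+q^n}\right).$$
   Context: For $n\in\mathbb N_0\cup\{\infty\}$, $(a;q)_n:=\prod_{j=0}^{n-1}(1-aq^j)$. Define $$F^{\rm ed}_{\rm ou}(q):=\sum_{n=0}^\infty \frac{q^{2n+1}(-q^{2n+2};q^2)_\infty}{(q;q^2)_{n+1}},$$ the generating function for partitions into at least one odd part, with odd parts unrestricted in multiplicity, and even parts distinct and all larger than every odd part; $F^{\rm ed}_{\rm ou}(-q)$ denotes this function evaluated at $-q$. *)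

(* Defs.v *)
From Stdlib Require Import Reals ZArith ClassicalEpsilon.
Open Scope R_scope.

Record Cplx := Cmk { Re : R; Im : R }.

Definition Czero : Cplx := Cmk 0 0.
Definition Cone : Cplx := Cmk 1 0.
Definition Ctwo : Cplx := Cmk 2 0.
Definition Cadd (z w : Cplx) : Cplx := Cmk (Re z + Re w) (Im z + Im w).
Definition Copp (z : Cplx) : Cplx := Cmk (- Re z) (- Im z).
Definition Csub (z w : Cplx) : Cplx := Cadd z (Copp w).
Definition Cmul (z w : Cplx) : Cplx :=
  Cmk (Re z * Re w - Im z * Im w) (Re z * Im w + Im z * Re w).
Definition Cinv (z : Cplx) : Cplx :=
  Cmk (Re z / (Re z ^ 2 + Im z ^ 2)) (- Im z / (Re z ^ 2 + Im z ^ 2)).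
Definition Cdiv (z w : Cplx) : Cplx := Cmul z (Cinv w).
Fixpoint Cpow (z : Cplx) (n : nat) : Cplx :=
  match n with O => Cone | S k => Cmul z (Cpow z k) end.
Definition Cnorm (z : Cplx) : R := sqrt (Re z ^ 2 + Im z ^ 2).

(** Convergence of sequences and limits (limit chosen by classical epsilon;
    only meaningful when the sequence converges). *)
Definition Ccv (u : nat -> Cplx) (l : Cplx) : Prop :=
  forall eps : R, eps > 0 -> exists N : nat, forall n : nat, (n >= N)%nat ->
    Cnorm (Csub (u n) l) < eps.
Definition Clim (u : nat -> Cplx) : Cplx :=
  epsilon (inhabits Czero) (fun l => Ccv u l).

Fixpoint Cpsum (f : nat -> Cplx) (N : nat) : Cplx :=
  match N with O => Czero | S k => Cadd (Cpsum f k) (f k) end.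
Fixpoint Cpprod (f : nat -> Cplx) (N : nat) : Cplx :=
  match N with O => Cone | S k => Cmul (Cpprod f k) (f k) end.
Definition Cseries (f : nat -> Cplx) : Cplx := Clim (Cpsum f).

Definition qpoch (a q : Cplx) (n : nat) : Cplx :=
  Cpprod (fun j => Csub Cone (Cmul a (Cpow q j))) n.
Definition qpoch_inf (a q : Cplx) : Cplx := Clim (qpoch a q).

Definition F_ed_ou (q : Cplx) : Cplx :=
  Cseries (fun n =>
    Cdiv (Cmul (Cpow q (2 * n + 1))
               (qpoch_inf (Copp (Cpow q (2 * n + 2))) (Cpow q 2)))
         (qpoch q (Cpow q 2) (n + 1))).

(** Term of the bilateral sum  (-1)^n q^{3n(n+1)/2} / (1 + q^n), n in Z.  For n = -m < 0, numerator and
    denominator are multiplied by q^m, giving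
    (-1)^m q^{3m(m-1)/2 + m} / (q^m + 1), which equals the original term for
    q <> 0 and is its continuous (analytic) extension at q = 0. *)
Definition bil_term (q : Cplx) (n : Z) : Cplx :=
  if Z.leb 0 n then
    let k := Z.to_nat n in
    Cdiv (Cmul (Cpow (Copp Cone) k) (Cpow q (3 * k * (k + 1) / 2)))
         (Cadd Cone (Cpow q k))
  else
    let m := Z.to_nat (- n) in
    Cdiv (Cmul (Cpow (Copp Cone) m) (Cpow q (3 * m * (m - 1) / 2 + m)))
         (Cadd (Cpow q m) Cone).

Definition Zsum (f : Z -> Cplx) : Cplx :=
  Cadd (Cseries (fun n => f (Z.of_nat n)))
       (Cseries (fun m => f (- Z.of_nat (S m))%Z)).

(* Main.v *)
Require Import Defs.
From Stdlib Require Import Reals ZArith.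
Open Scope R_scope.
From Stdlib Require Import Lra Lia ClassicalEpsilon.
From Coquelicot Require Import Coquelicot.
Open Scope R_scope.

Ltac fld := field; repeat split; cbv beta; try assumption.

Fixpoint psum (f : nat -> C) (n : nat) : C :=
  match n with O => RtoC 0 | S k => (psum f k + f k)%C end.

Definition cv (u : nat -> C) (l : C) : Prop :=
  forall eps, 0 < eps -> exists N, forall n, (N <= n)%nat -> Cmod (u n - l) < eps.

Definition hsum (f : nat -> C) (l : C) := cv (psum f) l.

Lemma Cmod_sub_sym (a b : C) : Cmod (a - b) = Cmod (b - a).
Proof. replace (a - b)%C with (- (b - a))%C by ring. apply Cmod_opp. Qed.

Lemma Cmod_tri3 (a b c : C) : Cmod (a - c) <= Cmod (a - b) + Cmod (b - c).
Proof. replace (a - c)%C with ((a - b) + (b - c))%C by ring. apply Cmod_triangle. Qed.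

Lemma Cmod_small_eq (a b : C) : (forall eps, 0 < eps -> Cmod (a - b) < eps) -> a = b.
Proof.
  intros H. assert (Cmod (a - b) = 0).
  { destruct (Cmod_ge_0 (a - b)) as [Hl|He]; auto.
    specialize (H _ Hl). lra. }
  apply Cmod_eq_0 in H0. replace a with ((a - b) + b)%C by ring. rewrite H0. ring.
Qed.

Lemma cv_unique u l1 l2 : cv u l1 -> cv u l2 -> l1 = l2.
Proof.
  intros H1 H2. apply Cmod_small_eq. intros eps He.
  destruct (H1 (eps/2)) as [N1 HN1]; [lra|].
  destruct (H2 (eps/2)) as [N2 HN2]; [lra|].
  specialize (HN1 (N1+N2)%nat ltac:(lia)). specialize (HN2 (N1+N2)%nat ltac:(lia)).
  rewrite Cmod_sub_sym in HN1.
  pose proof (Cmod_tri3 l1 (u (N1+N2)%nat) l2). lra.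
Qed.

Lemma cv_const c : cv (fun _ => c) c.
Proof. intros eps He. exists O. intros. replace (c - c)%C with (RtoC 0) by ring. rewrite Cmod_0. lra. Qed.

Lemma cv_ext u v l : (exists N0, forall n, (N0 <= n)%nat -> u n = v n) -> cv u l -> cv v l.
Proof.
  intros [N0 HN] H eps He. destruct (H eps He) as [N HN'].
  exists (N0 + N)%nat. intros n Hn. rewrite <- HN by lia. apply HN'. lia.
Qed.

Lemma cv_ext' u v l : (forall n, u n = v n) -> cv u l -> cv v l.
Proof. intros H. apply cv_ext. exists O. auto. Qed.

Lemma cv_comp u l h : cv u l -> (forall N, exists M, forall n, (M <= n)%nat -> (N <= h n)%nat) ->
  cv (fun n => u (h n)) l.
Proof.
  intros H Hh eps He. destruct (H eps He) as [N HN]. destruct (Hh N) as [M HM].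
  exists M. intros n Hn. apply HN. apply HM. auto.
Qed.

Lemma cv_shift u l k : cv u l -> cv (fun n => u (n + k)%nat) l.
Proof. intros H. apply cv_comp; auto. intros N. exists N. intros; lia. Qed.

Lemma cv_unshift u l k : cv (fun n => u (n + k)%nat) l -> cv u l.
Proof.
  intros H eps He. destruct (H eps He) as [N HN]. exists (N + k)%nat. intros n Hn.
  replace n with ((n - k) + k)%nat by lia. apply HN. lia.
Qed.

Lemma cv_plus u v a b : cv u a -> cv v b -> cv (fun n => u n + v n)%C (a + b)%C.
Proof.
  intros Hu Hv eps He.
  destruct (Hu (eps/2)) as [N1 H1]; [lra|]. destruct (Hv (eps/2)) as [N2 H2]; [lra|].
  exists (N1+N2)%nat. intros n Hn.
  replace (u n + v n - (a + b))%C with ((u n - a) + (v n - b))%C by ring.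
  eapply Rle_lt_trans. apply Cmod_triangle.
  specialize (H1 n ltac:(lia)). specialize (H2 n ltac:(lia)). lra.
Qed.

Lemma cv_opp u a : cv u a -> cv (fun n => - u n)%C (- a)%C.
Proof.
  intros Hu eps He. destruct (Hu eps He) as [N H]. exists N. intros n Hn.
  replace (- u n - - a)%C with (- (u n - a))%C by ring. rewrite Cmod_opp. auto.
Qed.

Lemma cv_minus u v a b : cv u a -> cv v b -> cv (fun n => u n - v n)%C (a - b)%C.
Proof. intros. apply cv_plus; auto. apply cv_opp; auto. Qed.

Lemma cv_bounded u l : cv u l -> exists M, 0 < M /\ forall n, Cmod (u n) <= M.
Proof.
  intros H. destruct (H 1) as [N HN]; [lra|].
  assert (forall k, exists M, 0 < M /\ forall n, (n < k)%nat -> Cmod (u n) <= M).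
  { induction k.
    - exists 1. split; [lra|]. intros; lia.
    - destruct IHk as [M [HM HM']]. exists (M + Cmod (u k)). split.
      { pose proof (Cmod_ge_0 (u k)); lra. }
      intros n Hn. destruct (Nat.eq_dec n k).
      + subst. pose proof (Cmod_ge_0 (u k)); lra.
      + pose proof (HM' n ltac:(lia)). pose proof (Cmod_ge_0 (u k)); lra. }
  destruct (H0 N) as [M [HM HM']]. exists (M + Cmod l + 1). split.
  { pose proof (Cmod_ge_0 l); lra. }
  intros n. destruct (Nat.lt_ge_cases n N).
  - pose proof (HM' n H1). pose proof (Cmod_ge_0 l); lra.
  - specialize (HN n H1). replace (u n) with ((u n - l) + l)%C by ring.
    eapply Rle_trans. apply Cmod_triangle. pose proof (Cmod_ge_0 l). lra.
Qed.

Lemma cv_mult u v a b : cv u a -> cv v b -> cv (fun n => u n * v n)%C (a * b)%C.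
Proof.
  intros Hu Hv. destruct (cv_bounded u a Hu) as [M [HM HMb]].
  intros eps He.
  set (e1 := eps / (2 * (Cmod b + 1))). set (e2 := eps / (2 * M)).
  assert (Hb: 0 <= Cmod b) by apply Cmod_ge_0.
  assert (He1 : 0 < e1) by (unfold e1; apply Rdiv_lt_0_compat; lra).
  assert (He2 : 0 < e2) by (unfold e2; apply Rdiv_lt_0_compat; lra).
  destruct (Hu e1 He1) as [N1 H1]. destruct (Hv e2 He2) as [N2 H2].
  exists (N1 + N2)%nat. intros n Hn.
  replace (u n * v n - a * b)%C with (u n * (v n - b) + (u n - a) * b)%C by ring.
  eapply Rle_lt_trans. apply Cmod_triangle. rewrite !Cmod_mult.
  specialize (H1 n ltac:(lia)). specialize (H2 n ltac:(lia)). specialize (HMb n).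
  assert (Cmod (u n) * Cmod (v n - b) <= M * e2).
  { apply Rmult_le_compat; auto using Cmod_ge_0; lra. }
  assert (Cmod (u n - a) * Cmod b <= e1 * Cmod b).
  { apply Rmult_le_compat_r; auto; lra. }
  assert (M * e2 = eps / 2) by (unfold e2; field; lra).
  assert (e1 * Cmod b < eps / 2).
  { unfold e1. apply (Rmult_lt_reg_r (2 * (Cmod b + 1))). lra.
    field_simplify; lra. }
  lra.
Qed.

Lemma cv_scal c u a : cv u a -> cv (fun n => c * u n)%C (c * a)%C.
Proof. intros. apply cv_mult; auto. apply cv_const. Qed.

Lemma cv_Cmod_lower u l m : cv u l -> (forall n, m <= Cmod (u n)) -> m <= Cmod l.
Proof.
  intros H Hm. destruct (Rle_lt_dec m (Cmod l)) as [|Hlt]; auto.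
  destruct (H (m - Cmod l)) as [N HN]; [lra|]. specialize (HN N (le_n _)).
  specialize (Hm N). pose proof (Cmod_tri3 (u N) l 0).
  replace (u N - 0)%C with (u N) in H0 by ring. replace (l - 0)%C with l in H0 by ring. lra.
Qed.

Lemma cv_le u l a B : cv u l -> (exists N0, forall n, (N0 <= n)%nat -> Cmod (u n - a) <= B) ->
  Cmod (l - a) <= B.
Proof.
  intros H [N0 HN0]. destruct (Rle_lt_dec (Cmod (l - a)) B) as [|Hlt]; auto.
  destruct (H (Cmod (l - a) - B)) as [N HN]; [lra|].
  specialize (HN (N + N0)%nat ltac:(lia)). specialize (HN0 (N + N0)%nat ltac:(lia)).
  pose proof (Cmod_tri3 l (u (N+N0)%nat) a). rewrite Cmod_sub_sym in HN. lra.
Qed.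

Lemma Cinv_neq0 (z : C) : z <> RtoC 0 -> (/ z)%C <> RtoC 0.
Proof.
  intros H H0. apply H. replace z with (z * (/ z * z))%C.
  rewrite H0. ring. field. auto.
Qed.

Lemma cv_inv u l : cv u l -> l <> RtoC 0 -> cv (fun n => / u n)%C (/ l)%C.
Proof.
  intros H Hl. apply Cmod_gt_0 in Hl as Hlp.
  destruct (H (Cmod l / 2)) as [N0 HN0]; [lra|].
  assert (Hlow : forall n, (N0 <= n)%nat -> Cmod l / 2 <= Cmod (u n)).
  { intros n Hn. specialize (HN0 n Hn). pose proof (Cmod_tri3 l (u n) 0).
    replace (l - 0)%C with l in H0 by ring. replace (u n - 0)%C with (u n) in H0 by ring.
    rewrite Cmod_sub_sym in HN0. lra. }
  intros eps He.
  destruct (H (eps * (Cmod l * Cmod l / 2))) as [N1 HN1].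
  { apply Rmult_lt_0_compat; auto. nra. }
  exists (N0 + N1)%nat. intros n Hn.
  specialize (Hlow n ltac:(lia)). specialize (HN1 n ltac:(lia)).
  assert (Hun : u n <> RtoC 0).
  { intros E. rewrite E, Cmod_0 in Hlow. lra. }
  replace (/ u n - / l)%C with ((l - u n) * / u n * / l)%C by (field; auto).
  rewrite !Cmod_mult, !Cmod_inv by auto. rewrite Cmod_sub_sym.
  assert (0 < Cmod (u n)) by lra.
  apply (Rmult_lt_reg_r (Cmod (u n) * Cmod l)). apply Rmult_lt_0_compat; lra.
  replace (Cmod (u n - l) * / Cmod (u n) * / Cmod l * (Cmod (u n) * Cmod l))
    with (Cmod (u n - l)) by (field; lra).
  assert (eps * (Cmod l * Cmod l / 2) <= eps * (Cmod (u n) * Cmod l)).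
  { apply Rmult_le_compat_l; [lra|]. 
    replace (Cmod l * Cmod l / 2) with (Cmod l / 2 * Cmod l) by field.
    apply Rmult_le_compat_r; lra. }
  lra.
Qed.

Lemma cv_div u v a b : cv u a -> cv v b -> b <> RtoC 0 -> cv (fun n => u n / v n)%C (a / b)%C.
Proof. intros. unfold Cdiv. apply cv_mult; auto. apply cv_inv; auto. Qed.

Lemma pow_small r eps : 0 <= r < 1 -> 0 < eps -> exists N, forall n, (N <= n)%nat -> r ^ n < eps.
Proof.
  intros Hr He. destruct (pow_lt_1_zero r ltac:(rewrite Rabs_pos_eq; lra) eps He) as [N HN].
  exists N. intros n Hn. specialize (HN n Hn). rewrite Rabs_pos_eq in HN; auto.
  apply pow_le; lra.
Qed.

Lemma cv_dom u l M r : 0 <= r < 1 -> (forall n, Cmod (u n - l) <= M * r ^ n) -> cv u l.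
Proof.
  intros Hr H eps He.
  assert (HM : 0 <= M). { specialize (H O). simpl in H. pose proof (Cmod_ge_0 (u O - l)). lra. }
  destruct (pow_small r (eps / (M + 1)) Hr) as [N HN].
  { apply Rdiv_lt_0_compat; lra. }
  exists N. intros n Hn. eapply Rle_lt_trans. apply H.
  specialize (HN n Hn).
  apply Rle_lt_trans with ((M + 1) * r ^ n).
  { apply Rmult_le_compat_r. apply pow_le; lra. lra. }
  apply (Rmult_lt_reg_r (/ (M + 1))). apply Rinv_0_lt_compat; lra.
  replace ((M + 1) * r ^ n * / (M + 1)) with (r ^ n) by (field; lra). auto.
Qed.

Lemma C_complete u : (forall eps, 0 < eps -> exists N, forall m n, (N <= m)%nat -> (N <= n)%nat ->
   Cmod (u m - u n) < eps) -> exists l, cv u l.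
Proof.
  intros H.
  assert (H1 : Cauchy_crit (fun n => fst (u n))).
  { intros eps He. destruct (H eps He) as [N HN]. exists N. intros n m Hn Hm.
    unfold Rdist. eapply Rle_lt_trans; [|apply (HN n m); lia].
    pose proof (re_le_Cmod (u n - u m)) as H0.
    replace (Re (u n - u m)%C) with (fst (u n) - fst (u m)) in H0 by (unfold Re; simpl; ring). exact H0. }
  assert (H2 : Cauchy_crit (fun n => snd (u n))).
  { intros eps He. destruct (H eps He) as [N HN]. exists N. intros n m Hn Hm.
    unfold Rdist. eapply Rle_lt_trans; [|apply (HN n m); lia].
    pose proof (re_le_Cmod (Ci * (u n - u m))%C) as H0. rewrite Cmod_mult, Cmod_Ci in H0.
    replace (Re (Ci * (u n - u m))%C) with (- (snd (u n) - snd (u m))) in H0 by (unfold Re; simpl; ring).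
    rewrite Rabs_Ropp in H0. lra. }
  destruct (Rcomplete.R_complete _ H1) as [l1 Hl1].
  destruct (Rcomplete.R_complete _ H2) as [l2 Hl2].
  exists (l1, l2). intros eps He.
  destruct (Hl1 (eps/2)) as [N1 HN1]; [lra|]. destruct (Hl2 (eps/2)) as [N2 HN2]; [lra|].
  exists (N1 + N2)%nat. intros n Hn.
  specialize (HN1 n ltac:(lia)). specialize (HN2 n ltac:(lia)). unfold Rdist in *.
  eapply Rle_lt_trans. apply Cmod_2Rmax. simpl.
  assert (Hs : sqrt 2 < 2).
  { rewrite <- (sqrt_square 2) at 2 by lra. apply sqrt_lt_1; lra. }
  assert (Rmax (Rabs (fst (u n) + - l1)) (Rabs (snd (u n) + - l2)) < eps / 2).
  { apply Rmax_lub_lt; unfold Rminus in *; auto. }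
  pose proof (sqrt_pos 2). 
  assert (0 <= Rmax (Rabs (fst (u n) + - l1)) (Rabs (snd (u n) + - l2))).
  { eapply Rle_trans. apply Rabs_pos. apply Rmax_l. }
  nra.
Qed.

Lemma psum_add f n m : psum f (n + m) = (psum f n + psum (fun k => f (n + k)%nat) m)%C.
Proof.
  induction m; simpl.
  - rewrite Nat.add_0_r. ring.
  - rewrite Nat.add_succ_r. simpl. rewrite IHm. ring.
Qed.

Lemma psum_S_l f n : psum f (S n) = (f O + psum (fun k => f (S k)) n)%C.
Proof. replace (S n) with (1 + n)%nat by lia. rewrite psum_add. simpl. ring. Qed.

Lemma psum_ext f g n : (forall k, (k < n)%nat -> f k = g k) -> psum f n = psum g n.
Proof. induction n; simpl; intros; auto. rewrite IHn by (intros; apply H; lia). rewrite H by lia. auto. Qed.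

Lemma psum_plus f g n : psum (fun k => f k + g k)%C n = (psum f n + psum g n)%C.
Proof. induction n; simpl. ring. rewrite IHn. ring. Qed.

Lemma psum_scal c f n : psum (fun k => c * f k)%C n = (c * psum f n)%C.
Proof. induction n; simpl. ring. rewrite IHn. ring. Qed.

Lemma psum_opp f n : psum (fun k => - f k)%C n = (- psum f n)%C.
Proof. induction n; simpl. ring. rewrite IHn. ring. Qed.

Lemma psum_minus f g n : psum (fun k => f k - g k)%C n = (psum f n - psum g n)%C.
Proof. induction n; simpl. ring. rewrite IHn. ring. Qed.

Lemma psum_zero n : psum (fun _ => RtoC 0) n = RtoC 0.
Proof. induction n; simpl; auto. rewrite IHn. ring. Qed.

Lemma geom_sum_bound (A r : R) (g : nat -> C) m : 0 <= r < 1 ->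
  (forall k, Cmod (g k) <= A * r ^ k) -> Cmod (psum g m) <= A / (1 - r).
Proof.
  intros Hr H.
  assert (HA : 0 <= A). { specialize (H O). simpl in H. pose proof (Cmod_ge_0 (g O)). lra. }
  assert (forall m, Cmod (psum g m) <= A * (1 - r ^ m) / (1 - r)).
  { induction m0; simpl.
    - rewrite Cmod_0. replace (A * (1 - 1) / (1 - r)) with 0 by (field; lra). lra.
    - eapply Rle_trans. apply Cmod_triangle.
      replace (A * (1 - r * r ^ m0) / (1 - r)) with (A * (1 - r ^ m0) / (1 - r) + A * r ^ m0)
        by (field; lra). specialize (H m0). lra. }
  eapply Rle_trans. apply H0. 
  apply Rmult_le_compat_r. apply Rlt_le, Rinv_0_lt_compat; lra.
  assert (0 <= r ^ m) by (apply pow_le; lra). nra.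
Qed.

Lemma hsum_geom f M r : 0 <= r < 1 -> (forall k, Cmod (f k) <= M * r ^ k) -> exists l, hsum f l.
Proof.
  intros Hr H. apply C_complete.
  assert (HM : 0 <= M). { specialize (H O). simpl in H. pose proof (Cmod_ge_0 (f O)). lra. }
  assert (Hd : forall n m, (n <= m)%nat -> Cmod (psum f m - psum f n) <= M * r ^ n / (1 - r)).
  { intros n m Hnm. replace m with (n + (m - n))%nat by lia. rewrite psum_add.
    replace (psum f n + psum (fun k => f (n + k)%nat) (m - n) - psum f n)%C
      with (psum (fun k => f (n + k)%nat) (m - n)) by ring.
    apply geom_sum_bound; auto. intros k. rewrite Rmult_assoc, <- pow_add. apply H. }
  intros eps He.
  destruct (pow_small r (eps * (1 - r) / (M + 1)) Hr) as [N HN].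
  { apply Rdiv_lt_0_compat; [apply Rmult_lt_0_compat|]; lra. }
  exists N. intros m n Hm Hn.
  assert (Hb : forall k, (N <= k)%nat -> M * r ^ k / (1 - r) < eps).
  { intros k Hk. specialize (HN k Hk).
    apply Rle_lt_trans with ((M + 1) * r ^ k / (1 - r)).
    { unfold Rdiv. apply Rmult_le_compat_r. apply Rlt_le, Rinv_0_lt_compat; lra.
      apply Rmult_le_compat_r. apply pow_le; lra. lra. }
    apply (Rmult_lt_reg_r ((1 - r) / (M + 1))). apply Rdiv_lt_0_compat; lra.
    replace ((M + 1) * r ^ k / (1 - r) * ((1 - r) / (M + 1))) with (r ^ k) by (field; lra).
    replace (eps * ((1 - r) / (M + 1))) with (eps * (1 - r) / (M + 1)) by (field; lra). auto. }
  destruct (Nat.le_ge_cases n m).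
  - eapply Rle_lt_trans. apply Hd; auto. apply Hb; auto.
  - rewrite Cmod_sub_sym. eapply Rle_lt_trans. apply Hd; auto. apply Hb; auto.
Qed.

Lemma hsum_tail_bound f l M r n : 0 <= r < 1 -> (forall k, Cmod (f k) <= M * r ^ k) ->
  hsum f l -> Cmod (l - psum f n) <= M * r ^ n / (1 - r).
Proof.
  intros Hr H Hl. apply (cv_le _ _ _ _ Hl). exists n. intros m Hm.
  replace m with (n + (m - n))%nat by lia. rewrite psum_add.
  replace (psum f n + psum (fun k => f (n + k)%nat) (m - n) - psum f n)%C
    with (psum (fun k => f (n + k)%nat) (m - n)) by ring.
  apply geom_sum_bound; auto. intros k. rewrite Rmult_assoc, <- pow_add. apply H.
Qed.

Lemma hsum_bound f l M r : 0 <= r < 1 -> (forall k, Cmod (f k) <= M * r ^ k) ->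
  hsum f l -> Cmod l <= M / (1 - r).
Proof.
  intros Hr H Hl. pose proof (hsum_tail_bound f l M r O Hr H Hl). simpl in H0.
  replace (l - 0)%C with l in H0 by ring. rewrite Rmult_1_r in H0. auto.
Qed.

Lemma hsum_unique f l1 l2 : hsum f l1 -> hsum f l2 -> l1 = l2.
Proof. apply cv_unique. Qed.

Lemma hsum_plus f g a b : hsum f a -> hsum g b -> hsum (fun k => f k + g k)%C (a + b)%C.
Proof. intros. unfold hsum. eapply cv_ext'. intros; symmetry; apply psum_plus. apply cv_plus; auto. Qed.

Lemma hsum_minus f g a b : hsum f a -> hsum g b -> hsum (fun k => f k - g k)%C (a - b)%C.
Proof. intros. unfold hsum. eapply cv_ext'. intros; symmetry; apply psum_minus. apply cv_minus; auto. Qed.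

Lemma hsum_scal c f a : hsum f a -> hsum (fun k => c * f k)%C (c * a)%C.
Proof. intros. unfold hsum. eapply cv_ext'. intros; symmetry; apply psum_scal. apply cv_scal; auto. Qed.

Lemma hsum_ext f g a : (forall k, f k = g k) -> hsum f a -> hsum g a.
Proof. intros. unfold hsum. eapply cv_ext'. intros; apply psum_ext; auto. auto. Qed.

Lemma hsum_shift f a : hsum f a -> hsum (fun k => f (S k)) (a - f O)%C.
Proof.
  intros H. unfold hsum.
  eapply cv_ext'. 2: apply (cv_minus _ _ _ _ (cv_shift _ _ 1 H) (cv_const (f O))).
  intros n. cbv beta. replace (n + 1)%nat with (S n) by lia. rewrite psum_S_l. ring.
Qed.

Lemma hsum_unshift f a : hsum (fun k => f (S k)) a -> hsum f (f O + a)%C.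
Proof.
  intros H. unfold hsum. apply cv_unshift with (k := 1%nat).
  eapply cv_ext'. 2: apply (cv_plus _ _ _ _ (cv_const (f O)) H).
  intros n. cbv beta. replace (n + 1)%nat with (S n) by lia. rewrite psum_S_l. ring.
Qed.

Lemma cv_psum (a : nat -> nat -> C) (b : nat -> C) K :
  (forall k, cv (fun N => a N k) (b k)) -> cv (fun N => psum (a N) K) (psum b K).
Proof.
  induction K; intros H; simpl.
  - apply cv_const.
  - apply cv_plus; auto.
Qed.

Lemma tannery (a : nat -> nat -> C) (b : nat -> C) (h : nat -> nat) M r l :
  0 <= r < 1 ->
  (forall k, cv (fun N => a N k) (b k)) ->
  (forall N k, Cmod (a N k) <= M * r ^ k) ->
  (forall N, exists P, forall n, (P <= n)%nat -> (N <= h n)%nat) ->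
  hsum b l ->
  cv (fun N => psum (a N) (h N)) l.
Proof.
  intros Hr Hcv Hb Hh Hl.
  assert (HM : 0 <= M). { specialize (Hb O O). simpl in Hb. pose proof (Cmod_ge_0 (a O O)). lra. }
  assert (Hbb : forall k, Cmod (b k) <= M * r ^ k).
  { intros k. replace (b k) with (b k - 0)%C by ring. apply (cv_le _ _ 0 _ (Hcv k)). exists O. intros n _.
    replace (a n k - 0)%C with (a n k) by ring. auto. }
  intros eps He.
  destruct (pow_small r (eps * (1 - r) / (3 * (M + 1))) Hr) as [K HK].
  { apply Rdiv_lt_0_compat; [apply Rmult_lt_0_compat|]; lra. }
  assert (HtK : M * r ^ K / (1 - r) < eps / 3).
  { specialize (HK K (le_n _)).
    apply Rle_lt_trans with ((M + 1) * r ^ K / (1 - r)).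
    { unfold Rdiv. apply Rmult_le_compat_r. apply Rlt_le, Rinv_0_lt_compat; lra.
      apply Rmult_le_compat_r. apply pow_le; lra. lra. }
    apply (Rmult_lt_reg_r ((1 - r) / (M + 1))). apply Rdiv_lt_0_compat; lra.
    replace ((M + 1) * r ^ K / (1 - r) * ((1 - r) / (M + 1))) with (r ^ K) by (field; lra).
    replace (eps / 3 * ((1 - r) / (M + 1))) with (eps * (1 - r) / (3 * (M + 1))) by (field; lra).
    auto. }
  destruct (cv_psum a b K Hcv (eps / 3)) as [N1 HN1]; [lra|].
  destruct (Hh K) as [P HP].
  exists (N1 + P)%nat. intros n Hn.
  specialize (HN1 n ltac:(lia)). specialize (HP n ltac:(lia)).
  replace (h n) with (K + (h n - K))%nat by lia. rewrite psum_add.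
  pose proof (hsum_tail_bound b l M r K Hr Hbb Hl) as Ht.
  assert (Cmod (psum (fun k => a n (K + k)%nat) (h n - K)) <= M * r ^ K / (1 - r)).
  { apply geom_sum_bound; auto. intros k. rewrite Rmult_assoc, <- pow_add. apply Hb. }
  replace (psum (a n) K + psum (fun k => a n (K + k)%nat) (h n - K) - l)%C with
     ((psum (a n) K - psum b K) + psum (fun k => a n (K + k)%nat) (h n - K) + (psum b K - l))%C by ring.
  eapply Rle_lt_trans. apply Cmod_triangle. 
  eapply Rle_lt_trans. apply Rplus_le_compat_r. apply Cmod_triangle.
  rewrite (Cmod_sub_sym (psum b K)). lra.
Qed.

Fixpoint pprod (f : nat -> C) (n : nat) : C :=
  match n with O => RtoC 1 | S k => (pprod f k * f k)%C end.

Definition qp (a b : C) (n : nat) : C := pprod (fun j => 1 - a * b ^ j)%C n.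

Lemma qp_0 a b : qp a b 0 = RtoC 1. Proof. reflexivity. Qed.
Lemma qp_S a b n : qp a b (S n) = (qp a b n * (1 - a * b ^ n))%C. Proof. reflexivity. Qed.

Lemma Cpow_add (z : C) n m : (z ^ (n + m) = z ^ n * z ^ m)%C.
Proof. induction n; simpl. ring. rewrite IHn. ring. Qed.

Lemma Cpow_mul (z : C) n m : (z ^ (n * m) = (z ^ n) ^ m)%C.
Proof.
  induction m; simpl. rewrite Nat.mul_0_r. reflexivity.
  rewrite Nat.mul_succ_r, Cpow_add, IHm. ring.
Qed.

Lemma Cpow_mult_l (z w : C) n : ((z * w) ^ n = z ^ n * w ^ n)%C.
Proof. induction n; simpl. ring. rewrite IHn. ring. Qed.

Lemma qp_add a b n m : qp a b (n + m) = (qp a b n * qp (a * b ^ n) b m)%C.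
Proof.
  induction m.
  - rewrite Nat.add_0_r. simpl. unfold qp. simpl. ring.
  - rewrite Nat.add_succ_r, !qp_S, IHm, Cpow_add. ring.
Qed.

Lemma exp_le_mono x y : x <= y -> exp x <= exp y.
Proof. intros [H|H]. apply Rlt_le, exp_increasing; auto. subst; lra. Qed.

Section Bounds.
Variables (a b : C) (rho : R).
Hypothesis Hrho : 0 <= rho < 1.
Hypothesis Ha : Cmod a <= rho.
Hypothesis Hb : Cmod b <= rho.

Lemma fac_bound j : Cmod (a * b ^ j) <= rho ^ S j.
Proof.
  rewrite Cmod_mult, Cmod_pow. simpl. apply Rmult_le_compat; auto using Cmod_ge_0.
  apply pow_le, Cmod_ge_0. apply pow_incr. split; auto using Cmod_ge_0.
Qed.

Lemma qp_upper n : Cmod (qp a b n) <= exp (rho / (1 - rho)).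
Proof.
  assert (forall n, Cmod (qp a b n) <= exp (rho * (1 - rho ^ n) / (1 - rho))).
  { induction n0.
    - unfold qp; simpl. rewrite Cmod_1. replace (rho * (1 - 1) / (1 - rho)) with 0 by (field; lra).
      rewrite exp_0. lra.
    - rewrite qp_S, Cmod_mult.
      replace (rho * (1 - rho ^ S n0) / (1 - rho)) with (rho * (1 - rho ^ n0) / (1 - rho) + rho ^ S n0)
        by (simpl; field; lra).
      rewrite exp_plus. apply Rmult_le_compat; auto using Cmod_ge_0.
      eapply Rle_trans. 
      { replace (1 - a * b ^ n0)%C with (1 + - (a * b ^ n0))%C by ring. apply Cmod_triangle. }
      rewrite Cmod_opp, Cmod_1. eapply Rle_trans; [|apply exp_ineq1_le].
      pose proof (fac_bound n0). lra. }
  eapply Rle_trans. apply H. apply exp_le_mono.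
  unfold Rdiv. apply Rmult_le_compat_r. apply Rlt_le, Rinv_0_lt_compat; lra.
  assert (0 <= rho ^ n) by (apply pow_le; lra). nra.
Qed.

Lemma one_minus_exp y : 0 <= y <= rho -> exp (- (y / (1 - rho))) <= 1 - y.
Proof.
  intros Hy.
  apply Rle_trans with (exp (- (y / (1 - y)))).
  { apply exp_le_mono. apply Ropp_le_contravar. unfold Rdiv. apply Rmult_le_compat_l. lra.
    apply Rinv_le_contravar; lra. }
  rewrite exp_Ropp. 
  assert (1 + y / (1 - y) <= exp (y / (1 - y))) by apply exp_ineq1_le.
  replace (1 + y / (1 - y)) with (/ (1 - y)) in H by (field; lra).
  replace (1 - y) with (/ / (1 - y)) at 2 by (field; lra).
  apply Rinv_le_contravar; auto. apply Rinv_0_lt_compat; lra.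
Qed.

Lemma pow_le1 n : rho ^ n <= 1.
Proof. induction n; simpl. lra. rewrite <- (Rmult_1_r 1). apply Rmult_le_compat; try lra. apply pow_le; lra. Qed.

Definition lowb := exp (- (rho / ((1 - rho) * (1 - rho)))).

Lemma lowb_pos : 0 < lowb. Proof. apply exp_pos. Qed.

Lemma qp_lower n : lowb <= Cmod (qp a b n).
Proof.
  assert (forall n, exp (- (rho * (1 - rho ^ n) / ((1 - rho) * (1 - rho)))) <= Cmod (qp a b n)).
  { induction n0.
    - unfold qp; simpl. rewrite Cmod_1.
      replace (rho * (1 - 1) / ((1 - rho) * (1 - rho))) with 0 by (field; lra).
      rewrite Ropp_0, exp_0. lra.
    - rewrite qp_S, Cmod_mult.
      replace (- (rho * (1 - rho ^ S n0) / ((1 - rho) * (1 - rho)))) with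
         (- (rho * (1 - rho ^ n0) / ((1 - rho) * (1 - rho))) + - (rho ^ S n0 / (1 - rho)))
        by (simpl; field; lra).
      rewrite exp_plus. apply Rmult_le_compat; try (apply Rlt_le, exp_pos); auto.
      pose proof (fac_bound n0) as Hf.
      assert (Hp : rho ^ S n0 <= rho).
      { simpl. pose proof (pow_le1 n0). pose proof (pow_le rho n0 ltac:(lra)). nra. }
      set (y := Cmod (a * b ^ n0)).
      assert (Hy0 : 0 <= y) by apply Cmod_ge_0.
      apply Rle_trans with (exp (- (y / (1 - rho)))).
      { apply exp_le_mono. apply Ropp_le_contravar. unfold Rdiv. apply Rmult_le_compat_r.
        apply Rlt_le, Rinv_0_lt_compat; lra. auto. }
      eapply Rle_trans. apply one_minus_exp. split; [exact Hy0|]. eapply Rle_trans; [exact Hf|exact Hp].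
      pose proof (Cmod_triangle (1 - a * b ^ n0) (a * b ^ n0)) as Ht.
      replace (1 - a * b ^ n0 + a * b ^ n0)%C with (RtoC 1) in Ht by ring.
      rewrite Cmod_1 in Ht. unfold y. lra. }
  eapply Rle_trans; [|apply H]. unfold lowb. apply exp_le_mono. apply Ropp_le_contravar.
  unfold Rdiv. apply Rmult_le_compat_r. apply Rlt_le, Rinv_0_lt_compat. nra.
  assert (0 <= rho ^ n) by (apply pow_le; lra). nra.
Qed.
End Bounds.

Lemma qp_neq0 a b rho n : 0 <= rho < 1 -> Cmod a <= rho -> Cmod b <= rho -> qp a b n <> RtoC 0.
Proof.
  intros. pose proof (qp_lower a b rho H H0 H1 n). pose proof (lowb_pos rho).
  intros E. rewrite E, Cmod_0 in H2. lra.
Qed.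

Lemma qp_inv_bound a b rho n : 0 <= rho < 1 -> Cmod a <= rho -> Cmod b <= rho ->
  Cmod (/ qp a b n) <= / lowb rho.
Proof.
  intros. rewrite Cmod_inv by (eapply qp_neq0; eauto).
  apply Rinv_le_contravar. apply lowb_pos. apply qp_lower; auto.
Qed.

Lemma qp_cv a b rho : 0 <= rho < 1 -> Cmod a <= rho -> Cmod b <= rho ->
  exists l, cv (qp a b) l /\ lowb rho <= Cmod l.
Proof.
  intros Hr Ha Hb.
  set (d := fun j => (qp a b (S j) - qp a b j)%C).
  assert (Hd : forall j, Cmod (d j) <= (exp (rho / (1 - rho)) * rho) * rho ^ j).
  { intros j. unfold d. rewrite qp_S.
    replace (qp a b j * (1 - a * b ^ j) - qp a b j)%C with (- (qp a b j * (a * b ^ j)))%C by ring.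
    rewrite Cmod_opp, Cmod_mult. rewrite Rmult_assoc.
    apply Rmult_le_compat; auto using Cmod_ge_0. apply qp_upper; auto.
    apply (fac_bound a b rho); auto. }
  destruct (hsum_geom d _ rho ltac:(lra) Hd) as [l' Hl'].
  assert (Hc : cv (qp a b) (1 + l')%C).
  { eapply cv_ext'. 2: apply (cv_plus _ _ _ _ (cv_const (RtoC 1)) Hl').
    intros n. induction n. simpl. unfold qp; simpl. ring.
    simpl psum. rewrite Cplus_assoc, IHn. unfold d. ring. }
  exists (1 + l')%C. split; auto.
  apply (cv_Cmod_lower _ _ _ Hc). intros. apply qp_lower; auto.
Qed.

Fixpoint T2 (n : nat) : nat := match n with O => O | S k => (T2 k + k)%nat end.

Lemma psum_rev (g : nat -> C) n : psum g n = psum (fun r => g (n - 1 - r)%nat) n.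
Proof.
  induction n. reflexivity.
  change (psum g (S n)) with (psum g n + g n)%C. rewrite IHn.
  rewrite (psum_S_l (fun r => g (S n - 1 - r)%nat)).
  replace (S n - 1 - 0)%nat with n by lia.
  rewrite Cplus_comm. f_equal. apply psum_ext. intros k Hk. f_equal. lia.
Qed.

Lemma psum_fold (g : nat -> C) n :
  psum g (2 * n + 1) = (g n + psum (fun r => g (n + 1 + r)%nat + g (n - 1 - r)%nat) n)%C.
Proof.
  replace (2 * n + 1)%nat with (n + (1 + n))%nat by lia.
  rewrite !psum_add. simpl. rewrite psum_plus. rewrite (psum_rev g n).
  rewrite Nat.add_0_r.
  replace (psum (fun k => g (n + S k)%nat) n) with (psum (fun r => g (n + 1 + r)%nat) n).
  ring. apply psum_ext. intros. f_equal. lia.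
Qed.

Lemma tri_swap (X : nat -> nat -> C) n :
  psum (fun j => psum (fun r => X j r) (S j)) (S n) =
  psum (fun r => psum (fun i => X (r + i)%nat r) (S (n - r))) (S n).
Proof.
  induction n.
  - simpl. ring.
  - transitivity (psum (fun j => psum (fun r => X j r) (S j)) (S n) +
       psum (fun r => X (S n) r) (S (S n)))%C. reflexivity.
    rewrite IHn.
    transitivity (psum (fun r => psum (fun i => X (r + i)%nat r) (S (S n - r))) (S n) +
       psum (fun i => X (S n + i)%nat (S n)) (S (S n - S n)))%C.
    2: reflexivity.
    replace (S n - S n)%nat with O by lia.
    assert (E : psum (fun r => psum (fun i => X (r + i)%nat r) (S (S n - r))) (S n) =
       (psum (fun r => psum (fun i => X (r + i)%nat r) (S (n - r))) (S n) +
        psum (fun r => X (S n) r) (S n))%C).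
    { rewrite <- psum_plus. apply psum_ext. intros r Hr.
      replace (S (S n - r)) with (S (n - r) + 1)%nat by lia. rewrite psum_add.
      change (psum ?f 1) with (RtoC 0 + f O)%C. cbv beta.
      replace (r + (S (n - r) + 0))%nat with (S n) by lia. ring. }
    rewrite E. change (psum (fun r => X (S n) r) (S (S n))) with
      (psum (fun r => X (S n) r) (S n) + X (S n) (S n))%C.
    change (psum (fun i => X (S n + i)%nat (S n)) 1) with (RtoC 0 + X (S n + 0)%nat (S n))%C.
    rewrite Nat.add_0_r. ring.
Qed.

Lemma T2_add a b : T2 (a + b) = (T2 a + T2 b + a * b)%nat.
Proof. induction b; simpl. rewrite Nat.add_0_r. lia. rewrite Nat.add_succ_r. simpl. rewrite IHb. nia. Qed.

Lemma T2_double p : (2 * T2 p + p = p * p)%nat.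
Proof. induction p; simpl. lia. nia. Qed.

Lemma Cpow_neq0 (z : C) k : z <> RtoC 0 -> (z ^ k)%C <> RtoC 0.
Proof.
  intros Hz. induction k; simpl.
  - intros E. apply (f_equal fst) in E. simpl in E. lra.
  - intros E. apply Cmod_gt_0 in Hz. apply Cmod_gt_0 in IHk.
    apply (f_equal Cmod) in E. rewrite Cmod_mult, Cmod_0 in E. nra.
Qed.

Lemma Cpow_one k : (RtoC 1 ^ k)%C = RtoC 1.
Proof. induction k; simpl; auto. rewrite IHk. ring. Qed.

Lemma m1_sq k : ((-1) ^ k * (-1) ^ k)%C = RtoC 1.
Proof. rewrite <- Cpow_mult_l. replace (-1 * -1)%C with (RtoC 1) by ring. apply Cpow_one. Qed.

Section Q.
Variable q : C.
Hypothesis hq : Cmod q < 1.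

Let rho := Cmod q.
Lemma rho_ok : 0 <= rho < 1. Proof. split. apply Cmod_ge_0. exact hq. Qed.
Lemma Cmod_mq : Cmod (- q)%C <= rho. Proof. rewrite Cmod_opp. unfold rho; lra. Qed.

Definition Q (n : nat) := qp q q n.
Definition MQ (n : nat) := qp (- q)%C q n.

Lemma Q_neq0 n : Q n <> RtoC 0.
Proof. apply (qp_neq0 _ _ rho); auto using rho_ok; unfold rho; lra. Qed.
Lemma MQ_neq0 n : MQ n <> RtoC 0.
Proof. apply (qp_neq0 _ _ rho); auto using rho_ok, Cmod_mq. unfold rho; lra. Qed.

Lemma Q_S n : Q (S n) = (Q n * (1 - q ^ S n))%C.
Proof. unfold Q. rewrite qp_S. reflexivity. Qed.
Lemma MQ_S n : MQ (S n) = (MQ n * (1 + q ^ S n))%C.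
Proof. unfold MQ. rewrite qp_S. simpl. ring. Qed.

Lemma qpow_small k : (1 <= k)%nat -> Cmod (q ^ k) < 1.
Proof.
  intros Hk. rewrite Cmod_pow. destruct k. lia. simpl.
  pose proof (pow_le rho k (proj1 rho_ok)). pose proof rho_ok.
  assert (rho ^ k <= 1) by (apply pow_le1; auto). unfold rho in *. nra.
Qed.

Lemma one_minus_neq0 k : (1 <= k)%nat -> (1 - q ^ k)%C <> RtoC 0.
Proof.
  intros Hk E. pose proof (qpow_small k Hk).
  replace (q ^ k)%C with (RtoC 1) in H by (replace (q ^ k)%C with (1 - (1 - q ^ k))%C by ring; rewrite E; ring).
  rewrite Cmod_1 in H. lra.
Qed.

Lemma one_plus_neq0 k : (1 + q ^ k)%C <> RtoC 0.
Proof.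
  destruct k.
  - simpl. intros E. apply (f_equal fst) in E. simpl in E. lra.
  - intros E. pose proof (qpow_small (S k) ltac:(lia)).
    replace (q ^ S k)%C with (- RtoC 1)%C in H by (replace (q ^ S k)%C with (- 1 + (1 + q ^ S k))%C by ring; rewrite E; ring).
    rewrite Cmod_opp, Cmod_1 in H. lra.
Qed.


Definition K (r : nat) := (4 * q ^ r / (1 + q ^ r) ^ 2)%C.
Definition sj (j : nat) := (K j * MQ j ^ 2)%C.
Definition cc (n r : nat) := (/ (Q (n - r) * Q (n + r)))%C.
Definition epsr (r : nat) := match r with O => RtoC (1/2) | _ => RtoC 1 end.
Definition au (r : nat) := (epsr r * (-1) ^ r * q ^ (T2 r) * (1 + q ^ r))%C.

Lemma Cpow_S (z : C) n : (z ^ S n = z * z ^ n)%C. Proof. reflexivity. Qed.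

Lemma S_ident r m : psum (fun i => sj (r + i) / (Q i * Q (2 * r + i)))%C (S m) =
   (K r * MQ (r + m) ^ 2 / (Q m * Q (2 * r + m)))%C.
Proof.
  induction m.
  - simpl. rewrite !Nat.add_0_r. unfold sj. field. split; apply Q_neq0.
  - change (psum ?f (S (S m))) with (psum f (S m) + f (S m))%C. rewrite IHm. cbv beta.
    unfold sj, K. rewrite !Nat.add_succ_r, !Q_S, !MQ_S.
    rewrite !Cpow_S. rewrite !Cpow_add.
    replace (2 * r)%nat with (r + r)%nat by lia. rewrite !Cpow_add.
    pose proof (Q_neq0 m). pose proof (Q_neq0 (r + r + m)). pose proof (MQ_neq0 (r + m)).
    pose proof (one_plus_neq0 r). pose proof (one_minus_neq0 (S m) ltac:(lia)).
    pose proof (one_minus_neq0 (S (r + r + m)) ltac:(lia)).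
    pose proof (one_plus_neq0 (S (r + m))).
    rewrite !Cpow_S, !Cpow_add in *.
    field. repeat split; cbv beta; assumption.
Qed.



Fixpoint qbin (M k : nat) : C :=
  match M, k with
  | _, O => RtoC 1
  | O, S _ => RtoC 0
  | S M', S k' => (qbin M' (S k') + q ^ (M' - k') * qbin M' k')%C
  end.

Lemma qbin_gt M k : (M < k)%nat -> qbin M k = RtoC 0.
Proof.
  revert k. induction M; intros k Hk; destruct k; try lia; simpl; auto.
  rewrite !IHM by lia. ring.
Qed.

Lemma qbin_0 M : qbin M 0 = RtoC 1. Proof. destruct M; reflexivity. Qed.

Lemma pascal_split (F : nat -> C) M :
  psum (fun k => qbin (S M) k * F k)%C (S (S M)) =
  (psum (fun k => qbin M k * F k)%C (S M) + psum (fun k => q ^ (M - k) * qbin M k * F (S k))%C (S M))%C.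
Proof.
  rewrite psum_S_l. rewrite (psum_S_l (fun k => qbin M k * F k)%C).
  simpl (qbin (S M) 0). simpl (qbin M 0).
  assert (E : psum (fun k => qbin (S M) (S k) * F (S k))%C (S M) =
     (psum (fun k => qbin M (S k) * F (S k))%C (S M) +
      psum (fun k => q ^ (M - k) * qbin M k * F (S k))%C (S M))%C).
  { rewrite <- psum_plus. apply psum_ext. intros k _. simpl. ring. }
  rewrite E.
  change (psum (fun k => qbin M (S k) * F (S k))%C (S M)) with
     (psum (fun k => qbin M (S k) * F (S k))%C M + qbin M (S M) * F (S M))%C.
  rewrite qbin_gt by lia. rewrite qbin_0. ring.
Qed.

Lemma Rothe m z : psum (fun k => qbin m k * ((-1) ^ k * q ^ (T2 k) * z ^ k))%C (S m) = qp z q m.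
Proof.
  induction m.
  - simpl. unfold qp. simpl. ring.
  - rewrite pascal_split, IHm. rewrite qp_S.
    assert (E : psum (fun k => q ^ (m - k) * qbin m k * ((-1) ^ S k * q ^ T2 (S k) * z ^ S k))%C (S m)
       = (- z * q ^ m * psum (fun k => qbin m k * ((-1) ^ k * q ^ (T2 k) * z ^ k))%C (S m))%C).
    { rewrite <- psum_scal. apply psum_ext. intros k Hk. simpl T2.
      rewrite Cpow_add. replace (q ^ m)%C with (q ^ (m - k) * q ^ k)%C.
      simpl. ring. rewrite <- Cpow_add. f_equal. lia. }
    rewrite E, IHm. ring.
Qed.

Lemma H_ident M a : psum (fun k => qbin M k * (q ^ (k * k) * a ^ k * qp (a * q ^ S k) q (M - k)))%C (S M) = RtoC 1.
Proof.
  revert a. induction M; intros a.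
  - simpl. unfold qp. simpl. ring.
  - rewrite pascal_split.
    assert (E1 : psum (fun k => qbin M k * (q ^ (k * k) * a ^ k * qp (a * q ^ S k) q (S M - k)))%C (S M)
       = ((1 - a * q ^ S M) * psum (fun k => qbin M k * (q ^ (k * k) * a ^ k * qp (a * q ^ S k) q (M - k)))%C (S M))%C).
    { rewrite <- psum_scal. apply psum_ext. intros k Hk.
      replace (S M - k)%nat with (S (M - k)) by lia. rewrite qp_S.
      replace (a * q ^ S k * q ^ (M - k))%C with (a * q ^ S M)%C. ring.
      replace (a * q ^ S k * q ^ (M - k))%C with (a * (q ^ S k * q ^ (M - k)))%C by ring.
      rewrite <- Cpow_add. f_equal. f_equal. lia. }
    assert (E2 : psum (fun k => q ^ (M - k) * qbin M k * (q ^ (S k * S k) * a ^ S k * qp (a * q ^ S (S k)) q (S M - S k)))%C (S M)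
       = (a * q ^ S M * psum (fun k => qbin M k * (q ^ (k * k) * (a * q) ^ k * qp (a * q * q ^ S k) q (M - k)))%C (S M))%C).
    { rewrite <- psum_scal. apply psum_ext. intros k Hk.
      replace (S M - S k)%nat with (M - k)%nat by lia.
      replace (a * q ^ S (S k))%C with (a * q * q ^ S k)%C by (simpl; ring).
      rewrite Cpow_mult_l.
      assert (Hq : (q ^ (M - k) * q ^ (S k * S k) = q ^ S M * q ^ (k * k) * q ^ k)%C).
      { rewrite <- !Cpow_add. f_equal. nia. }
      simpl (a ^ S k)%C.
      transitivity ((q ^ (M - k) * q ^ (S k * S k)) * (qbin M k * (a * a ^ k) * qp (a * q * q ^ S k) q (M - k)))%C.
      ring. rewrite Hq. ring. }
    rewrite E1, E2, !IHM. ring.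
Qed.


Lemma Q_0 : Q 0 = RtoC 1. Proof. reflexivity. Qed.
Lemma MQ_0 : MQ 0 = RtoC 1. Proof. reflexivity. Qed.

Lemma qbin_formula M k : (k <= M)%nat -> qbin M k = (Q M / (Q k * Q (M - k)))%C.
Proof.
  revert k. induction M; intros k Hk.
  - destruct k; [|lia]. simpl. rewrite Q_0. field.
  - destruct k.
    + rewrite qbin_0. simpl (S M - 0)%nat. rewrite Q_0. pose proof (Q_neq0 (S M)). fld.
    + simpl qbin. destruct (Nat.eq_dec k M).
      * subst. rewrite qbin_gt by lia. rewrite IHM by lia. rewrite !Nat.sub_diag, Q_0.
        pose proof (Q_neq0 M). pose proof (Q_neq0 (S M)). simpl. fld.
      * rewrite !IHM by lia.
        remember (M - S k)%nat as j.
        replace (M - k)%nat with (S j) by lia. replace (S M - S k)%nat with (S j) by lia.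
        replace M with (k + S j)%nat by lia.
        rewrite (Q_S k), (Q_S j), (Q_S (k + S j)).
        replace (q ^ S (k + S j))%C with (q ^ S k * q ^ S j)%C by (rewrite <- Cpow_add; f_equal; lia).
        pose proof (Q_neq0 k). pose proof (Q_neq0 j). pose proof (Q_neq0 (k + S j)).
        pose proof (one_minus_neq0 (S k) ltac:(lia)). pose proof (one_minus_neq0 (S j) ltac:(lia)).
        fld.
Qed.

Lemma qbin_sym M k : (k <= M)%nat -> qbin M (M - k) = qbin M k.
Proof.
  intros Hk. rewrite !qbin_formula by lia. replace (M - (M - k))%nat with k by lia.
  pose proof (Q_neq0 k). pose proof (Q_neq0 (M - k)). fld.
Qed.


Lemma U_ident n : (1 <= n)%nat -> psum (fun r => au r * cc n r)%C (S n) = RtoC 0.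
Proof.
  intros Hn.
  destruct (Classical_Prop.classic (q = RtoC 0)) as [Hq0|Hq0].
  -
    assert (HQ : forall k, Q k = RtoC 1).
    { induction k. reflexivity. rewrite Q_S, IHk, Hq0. simpl. ring. }
    destruct n as [|n']; [lia|].
    rewrite psum_S_l, psum_S_l.
    assert (Hz : psum (fun k => au (S (S k)) * cc (S n') (S (S k)))%C n' = RtoC 0).
    { rewrite <- (psum_zero n'). apply psum_ext. intros k _. unfold au. simpl T2.
      replace (T2 k + k + S k)%nat with (S (T2 k + k + k)) by lia. rewrite Hq0. simpl. ring. }
    rewrite Hz. unfold au, cc, epsr. rewrite !HQ. simpl. rewrite Hq0. simpl.
    apply injective_projections; simpl; field.
  - set (z := (/ q ^ n)%C).
    assert (Hqn : (q ^ n)%C <> RtoC 0) by (apply Cpow_neq0; auto).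
    assert (Hzq : (z * q ^ n)%C = RtoC 1) by (unfold z; field; auto).
    pose proof (Rothe (2 * n) z) as HR.
    assert (H0 : qp z q (2 * n) = RtoC 0).
    { replace (2 * n)%nat with (n + (1 + (n - 1)))%nat by lia. rewrite !qp_add.
      rewrite Hzq. unfold qp at 2. simpl. ring. }
    rewrite H0 in HR. replace (S (2 * n)) with (2 * n + 1)%nat in HR by lia.
    rewrite psum_fold in HR.
    set (g := fun k => (qbin (2 * n) k * ((-1) ^ k * q ^ T2 k * z ^ k))%C) in HR.
    set (w := ((-1) ^ n * q ^ T2 (S n))%C).
    assert (Hpow : forall k e, (T2 (S n) + T2 k = e + n * k)%nat ->
        (q ^ T2 (S n) * (q ^ T2 k * z ^ k))%C = (q ^ e)%C).
    { intros k e He. rewrite Cmult_assoc, <- Cpow_add, He, Cpow_add, Cpow_mul.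
      transitivity (q ^ e * (z * q ^ n) ^ k)%C. rewrite Cpow_mult_l. ring.
      rewrite Hzq, Cpow_one. ring. }
    assert (Ha : (w * g n)%C = qbin (2 * n) n).
    { unfold w, g. transitivity (((-1) ^ n * (-1) ^ n) * qbin (2 * n) n * (q ^ T2 (S n) * (q ^ T2 n * z ^ n)))%C.
      ring. rewrite m1_sq, (Hpow n 0%nat). simpl. ring.
      pose proof (T2_double n). simpl. nia. }
    assert (Hb : forall r, (r < n)%nat -> (w * (g (n + 1 + r)%nat + g (n - 1 - r)%nat))%C =
         (au (S r) * qbin (2 * n) (n + S r))%C).
    { intros r Hr. unfold w, g.
      replace (n + 1 + r)%nat with (n + S r)%nat by lia.
      replace (n - 1 - r)%nat with (n - S r)%nat by lia.
      replace (qbin (2 * n) (n - S r)) with (qbin (2 * n) (n + S r)).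
      2:{ rewrite <- qbin_sym by lia. f_equal. lia. }
      assert (E1 : (q ^ T2 (S n) * (q ^ T2 (n + S r) * z ^ (n + S r)))%C = (q ^ T2 (S r))%C).
      { apply Hpow. rewrite T2_add. pose proof (T2_double n). simpl. nia. }
      assert (E2 : (q ^ T2 (S n) * (q ^ T2 (n - S r) * z ^ (n - S r)))%C = (q ^ T2 (S r) * q ^ S r)%C).
      { rewrite <- Cpow_add. apply Hpow. remember (n - S r)%nat as p.
        replace n with (p + S r)%nat by lia.
        change (T2 (S (p + S r))) with (T2 (p + S r) + (p + S r))%nat. rewrite T2_add.
        pose proof (T2_double p). simpl T2. nia. }
      assert (S1 : ((-1) ^ n * (-1) ^ (n + S r))%C = ((-1) ^ S r)%C).
      { rewrite Cpow_add, Cmult_assoc, m1_sq. ring. }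
      assert (S2 : ((-1) ^ n * (-1) ^ (n - S r))%C = ((-1) ^ S r)%C).
      { replace n with ((n - S r) + S r)%nat at 1 by lia. rewrite Cpow_add.
        transitivity ((-1) ^ (n - S r) * (-1) ^ (n - S r) * (-1) ^ S r)%C. ring. rewrite m1_sq. ring. }
      transitivity (qbin (2 * n) (n + S r) *
        (((-1) ^ n * (-1) ^ (n + S r)) * (q ^ T2 (S n) * (q ^ T2 (n + S r) * z ^ (n + S r))) +
         ((-1) ^ n * (-1) ^ (n - S r)) * (q ^ T2 (S n) * (q ^ T2 (n - S r) * z ^ (n - S r)))))%C.
      ring. rewrite E1, E2, S1, S2. unfold au, epsr. ring. }
    assert (Hsum : (w * (g n + psum (fun r => g (n + 1 + r)%nat + g (n - 1 - r)%nat)%C n))%C =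
       psum (fun r => au r * qbin (2 * n) (n + r))%C (S n)).
    { rewrite psum_S_l. rewrite Cmult_plus_distr_l, Ha, <- psum_scal.
      f_equal. unfold au, epsr. rewrite Nat.add_0_r. simpl. apply injective_projections; simpl; field.
      apply psum_ext. intros r Hr. apply Hb. auto. }
    assert (HR' : (g n + psum (fun r => g (n + 1 + r)%nat + g (n - 1 - r)%nat)%C n)%C = RtoC 0) by exact HR.
    rewrite HR' in Hsum. rewrite Cmult_0_r in Hsum.
    assert (Hq2 : Q (2 * n) <> RtoC 0) by apply Q_neq0.
    assert (E : psum (fun r => au r * qbin (2 * n) (n + r))%C (S n) =
       (Q (2 * n) * psum (fun r => au r * cc n r)%C (S n))%C).
    { rewrite <- psum_scal. apply psum_ext. intros r Hr. rewrite qbin_formula by lia.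
      unfold cc. replace (2 * n - (n + r))%nat with (n - r)%nat by lia.
      pose proof (Q_neq0 (n + r)). pose proof (Q_neq0 (n - r)). fld. }
    rewrite E in Hsum.
    transitivity (/ Q (2 * n) * (Q (2 * n) * psum (fun r => au r * cc n r)%C (S n)))%C.
    field; auto. rewrite <- Hsum. ring.
Qed.


Lemma Q_shift a m : (Q (a + m) = Q a * qp (q * q ^ a) q m)%C.
Proof. unfold Q. rewrite qp_add. reflexivity. Qed.

Lemma I_ident r m : psum (fun i => q ^ ((r + i) * (r + i)) / (Q i * Q (2 * r + i) * Q (m - i)))%C (S m) =
   (q ^ (r * r) / (Q m * Q (2 * r + m)))%C.
Proof.
  pose proof (H_ident m (q ^ (2 * r))) as HH.
  transitivity (q ^ (r * r) / (Q m * Q (2 * r + m)) *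
    psum (fun k => qbin m k * (q ^ (k * k) * (q ^ (2 * r)) ^ k * qp (q ^ (2 * r) * q ^ S k) q (m - k)))%C (S m))%C.
  2:{ rewrite HH. ring. }
  rewrite <- psum_scal. apply psum_ext. intros k Hk.
  rewrite qbin_formula by lia.
  assert (Hs : (qp (q ^ (2 * r) * q ^ S k) q (m - k) = Q (2 * r + m) / Q (2 * r + k))%C).
  { replace (2 * r + m)%nat with ((2 * r + k) + (m - k))%nat by lia. rewrite Q_shift.
    replace (q * q ^ (2 * r + k))%C with (q ^ (2 * r) * q ^ S k)%C.
    pose proof (Q_neq0 (2 * r + k)). fld.
    rewrite Cpow_add. simpl. ring. }
  rewrite Hs. rewrite <- Cpow_mul.
  replace (q ^ ((r + k) * (r + k)))%C with (q ^ (r * r) * (q ^ (k * k) * q ^ (2 * r * k)))%C.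
  2:{ rewrite <- !Cpow_add. f_equal. nia. }
  pose proof (Q_neq0 m). pose proof (Q_neq0 k). pose proof (Q_neq0 (m - k)).
  pose proof (Q_neq0 (2 * r + k)). pose proof (Q_neq0 (2 * r + m)). fld.
Qed.

Definition dlt (j : nat) : C := match j with O => RtoC 1 | _ => RtoC 0 end.

Lemma psum_dlt (X : nat -> C) n : psum (fun j => X j * dlt j)%C (S n) = X O.
Proof.
  rewrite psum_S_l.
  replace (psum (fun k => X (S k) * dlt (S k))%C n) with (psum (fun _ => RtoC 0) n).
  rewrite psum_zero. simpl. ring. apply psum_ext. intros. simpl. ring.
Qed.

Lemma BL1 (g B : nat -> C) (Hp : forall j, psum (fun r => g r * cc j r)%C (S j) = B j) n :
  psum (fun j => sj j * B j)%C (S n) = psum (fun r => g r * K r * MQ n ^ 2 * cc n r)%C (S n).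
Proof.
  transitivity (psum (fun j => psum (fun r => sj j * (g r * cc j r)) (S j))%C (S n)).
  { apply psum_ext. intros j _. rewrite psum_scal, Hp. reflexivity. }
  rewrite tri_swap. apply psum_ext. intros r Hr.
  transitivity (g r * psum (fun i => sj (r + i) / (Q i * Q (2 * r + i)))%C (S (n - r)))%C.
  { rewrite <- psum_scal. apply psum_ext. intros i _. unfold cc.
    replace (r + i - r)%nat with i by lia. replace (r + i + r)%nat with (2 * r + i)%nat by lia.
    unfold Cdiv. ring. }
  rewrite S_ident. replace (r + (n - r))%nat with n by lia.
  replace (2 * r + (n - r))%nat with (n + r)%nat by lia.
  unfold cc. unfold Cdiv. ring.
Qed.

Lemma BL2 (g B : nat -> C) (Hp : forall j, psum (fun r => g r * cc j r)%C (S j) = B j) N :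
  psum (fun j => q ^ (j * j) * B j / Q (N - j))%C (S N) = psum (fun r => g r * q ^ (r * r) * cc N r)%C (S N).
Proof.
  transitivity (psum (fun j => psum (fun r => q ^ (j * j) / Q (N - j) * (g r * cc j r)) (S j))%C (S N)).
  { apply psum_ext. intros j _. rewrite psum_scal, Hp. unfold Cdiv. ring. }
  rewrite tri_swap. apply psum_ext. intros r Hr.
  transitivity (g r * psum (fun i => q ^ ((r + i) * (r + i)) / (Q i * Q (2 * r + i) * Q (N - r - i)))%C (S (N - r)))%C.
  { rewrite <- psum_scal. apply psum_ext. intros i Hi. unfold cc.
    replace (r + i - r)%nat with i by lia. replace (r + i + r)%nat with (2 * r + i)%nat by lia.
    replace (N - (r + i))%nat with (N - r - i)%nat by lia.
    pose proof (Q_neq0 i). pose proof (Q_neq0 (2 * r + i)). pose proof (Q_neq0 (N - r - i)). fld. }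
  rewrite I_ident. replace (2 * r + (N - r))%nat with (N + r)%nat by lia.
  unfold cc. unfold Cdiv. ring.
Qed.

Lemma au_pair j : psum (fun r => au r * cc j r)%C (S j) = dlt j.
Proof.
  destruct j.
  - simpl. unfold au, cc, epsr. simpl. rewrite Q_0. apply injective_projections; simpl; field.
  - apply U_ident. lia.
Qed.

Lemma K_0 : K 0 = RtoC 1.
Proof. unfold K. simpl. apply injective_projections; simpl; field. Qed.

Lemma Fp_pair j : psum (fun r => (K r * au r) * cc j r)%C (S j) = (/ MQ j ^ 2)%C.
Proof.
  pose proof (BL1 au dlt au_pair j) as HB. rewrite psum_dlt in HB.
  unfold sj in HB. rewrite K_0, MQ_0 in HB.
  assert (HM : (MQ j ^ 2)%C <> RtoC 0) by (apply Cpow_neq0, MQ_neq0).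
  pose proof (MQ_neq0 j).
  transitivity (/ MQ j ^ 2 * psum (fun r => au r * K r * MQ j ^ 2 * cc j r)%C (S j))%C.
  { rewrite <- psum_scal. apply psum_ext. intros. fld. }
  rewrite <- HB. fld.
Qed.

Lemma Uprime N : psum (fun r => au r * q ^ (r * r) * cc N r)%C (S N) = (/ Q N)%C.
Proof.
  rewrite <- (BL2 au dlt au_pair N).
  transitivity (psum (fun j => (q ^ (j * j) / Q (N - j)) * dlt j)%C (S N)).
  { apply psum_ext. intros. unfold Cdiv. ring. }
  rewrite psum_dlt. simpl. rewrite Nat.sub_0_r. unfold Cdiv. ring.
Qed.

Lemma FIN N : psum (fun j => q ^ (j * j) * / MQ j ^ 2 / Q (N - j))%C (S N) =
   psum (fun r => K r * au r * q ^ (r * r) * cc N r)%C (S N).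
Proof. apply (BL2 (fun r => K r * au r)%C). apply Fp_pair. Qed.

End Q.


Section L.
Variable q : C.
Hypothesis hq : Cmod q < 1.
Let rho := Cmod q.
Let L := lowb rho.

Lemma rho_ok' : 0 <= rho < 1. Proof. split. apply Cmod_ge_0. exact hq. Qed.
Lemma L_pos : 0 < L. Proof. apply lowb_pos. Qed.

Lemma pow_mono e k : (k <= e)%nat -> rho ^ e <= rho ^ k.
Proof.
  intros H. replace e with (k + (e - k))%nat by lia. rewrite pow_add.
  pose proof rho_ok'. pose proof (pow_le rho k ltac:(lra)).
  pose proof (pow_le1 rho H0 (e - k)). pose proof (pow_le rho (e - k) ltac:(lra)). nra.
Qed.

Lemma qpow_bound e k : (k <= e)%nat -> Cmod (q ^ e) <= rho ^ k.
Proof. intros. rewrite Cmod_pow. apply pow_mono. auto. Qed.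

Lemma Q_lower n : L <= Cmod (Q q n).
Proof. apply qp_lower; auto using rho_ok'; unfold rho; lra. Qed.
Lemma MQ_lower n : L <= Cmod (MQ q n).
Proof. apply qp_lower; auto using rho_ok'. rewrite Cmod_opp. unfold rho; lra. unfold rho; lra. Qed.

Lemma inv_bound (z : C) : L <= Cmod z -> Cmod (/ z) <= / L.
Proof.
  intros H. pose proof L_pos. assert (z <> RtoC 0). { intros E. rewrite E, Cmod_0 in H. lra. }
  rewrite Cmod_inv by auto. apply Rinv_le_contravar; lra.
Qed.

Lemma onep_lower k : 1 - rho <= Cmod (1 + q ^ k).
Proof.
  pose proof rho_ok'. destruct k.
  - simpl. replace (1 + 1)%C with (RtoC 2) by (apply injective_projections; simpl; ring).
    rewrite Cmod_R, Rabs_pos_eq; lra.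
  - pose proof (Cmod_triangle (1 + q ^ S k) (- q ^ S k)).
    replace (1 + q ^ S k + - q ^ S k)%C with (RtoC 1) in H0 by ring.
    rewrite Cmod_opp, Cmod_1 in H0. pose proof (qpow_bound (S k) 1 ltac:(lia)).
    rewrite pow_1 in H1. fold rho in H1. lra.
Qed.

Lemma onep_inv_bound k : Cmod (/ (1 + q ^ k)) <= / (1 - rho).
Proof.
  pose proof rho_ok'. pose proof (onep_lower k).
  assert ((1 + q ^ k)%C <> RtoC 0). { intros E. rewrite E, Cmod_0 in H0. lra. }
  rewrite Cmod_inv by auto. apply Rinv_le_contravar; lra.
Qed.

Lemma m1pow_mod k : Cmod ((-1) ^ k)%C = 1.
Proof. rewrite Cmod_pow. replace (Cmod (RtoC (-1))) with 1. apply pow1.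
  rewrite Cmod_R. rewrite Rabs_left; lra. Qed.


Definition phiT (x : C) (k : nat) : C := (x ^ k / qp x q k)%C.

Lemma qp_nz x k : Cmod x <= rho -> qp x q k <> RtoC 0.
Proof. intros. apply (qp_neq0 _ _ rho); auto using rho_ok'. unfold rho; lra. Qed.

Lemma phiT_bound x k : Cmod x <= rho -> Cmod (phiT x k) <= / L * rho ^ k.
Proof.
  intros Hx. unfold phiT, Cdiv. rewrite Cmod_mult, Cmod_pow. rewrite Rmult_comm.
  apply Rmult_le_compat; auto using Cmod_ge_0, pow_le.
  apply inv_bound. apply qp_lower; auto using rho_ok'. unfold rho; lra.
  apply pow_incr. split; auto using Cmod_ge_0.
Qed.

Lemma phi_exists x : Cmod x <= rho -> exists v, hsum (phiT x) v.
Proof. intros. apply (hsum_geom _ (/ L) rho). apply rho_ok'. intros; apply phiT_bound; auto. Qed.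

Lemma Cmod_xq x : Cmod x <= rho -> Cmod (x * q) <= rho.
Proof.
  intros. rewrite Cmod_mult. pose proof rho_ok'. pose proof (Cmod_ge_0 x). fold rho. nra.
Qed.

Lemma phi_step x A A' : Cmod x <= rho -> hsum (phiT x) A -> hsum (phiT (x * q)) A' ->
  A = (1 / (1 - x) + x ^ 2 / (1 - x) ^ 2 * A')%C.
Proof.
  intros Hx HA HA'. pose proof rho_ok'.
  assert (H1x : (1 - x)%C <> RtoC 0).
  { intros E. replace x with (RtoC 1) in Hx by (replace x with (1 - (1 - x))%C by ring; rewrite E; ring).
    rewrite Cmod_1 in Hx. lra. }
  set (b := fun k => (x ^ k / qp (x * q) q k)%C).
  assert (Hbb : forall k, Cmod (b k) <= / L * rho ^ k).
  { intros k. unfold b, Cdiv. rewrite Cmod_mult, Cmod_pow. rewrite Rmult_comm.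
    apply Rmult_le_compat; auto using Cmod_ge_0, pow_le.
    apply inv_bound. apply qp_lower; auto using rho_ok', Cmod_xq. unfold rho; lra.
    apply pow_incr. split; auto using Cmod_ge_0. }
  destruct (hsum_geom b _ rho H Hbb) as [Bv HB].
  assert (R2 : (A - 1 = x / (1 - x) * Bv)%C).
  { pose proof (hsum_shift _ _ HA) as HA1.
    assert (HA2 : hsum (fun k => phiT x (S k)) (x / (1 - x) * Bv)%C).
    { apply (hsum_ext (fun k => x / (1 - x) * b k)%C). 2: apply hsum_scal; auto.
      intros k. unfold phiT, b.
      assert (Hq1 : qp x q (S k) = ((1 - x) * qp (x * q) q k)%C).
      { change (S k) with (1 + k)%nat. rewrite qp_add.
        replace (x * q ^ 1)%C with (x * q)%C by (simpl; ring). unfold qp at 1. simpl. ring. }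
      rewrite Hq1. pose proof (qp_nz (x * q) k (Cmod_xq x Hx)).
      simpl (x ^ S k)%C. fld. }
    pose proof (hsum_unique _ _ _ HA1 HA2). rewrite <- H0. unfold phiT. simpl.
    unfold qp. simpl. field. }
  assert (R1 : (Bv - 1 = x * Bv + x * (A' - 1))%C).
  { pose proof (hsum_shift _ _ HB) as HB1.
    assert (HB2 : hsum (fun k => b (S k)) (x * Bv + x * (A' - phiT (x * q) 0))%C).
    { apply (hsum_ext (fun k => x * b k + x * phiT (x * q) (S k))%C).
      2:{ apply hsum_plus. apply hsum_scal; auto. apply hsum_scal. apply hsum_shift; auto. }
      intros k. unfold b, phiT. rewrite !qp_S.
      pose proof (qp_nz (x * q) (S k) (Cmod_xq x Hx)) as Hnz. rewrite qp_S in Hnz.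
      assert (Hp : qp (x * q) q k <> RtoC 0) by (apply qp_nz, Cmod_xq; auto).
      assert (Hf : (1 - x * q * q ^ k)%C <> RtoC 0).
      { intros E. apply Hnz. rewrite E. ring. }
      rewrite Cpow_mult_l. simpl. fld. }
    pose proof (hsum_unique _ _ _ HB1 HB2). unfold b in H0 at 1. simpl in H0.
    replace (phiT (x * q) 0) with (RtoC 1) in H0 by (unfold phiT, qp; simpl; field).
    rewrite <- H0. unfold qp. simpl. field. }
  assert (HBv : Bv = ((1 - x + x * A') / (1 - x))%C).
  { assert (E : (Bv * (1 - x) = 1 - x + x * A')%C).
    { transitivity ((Bv - 1 - (x * Bv + x * (A' - 1))) + (1 - x + x * A'))%C. ring.
      rewrite R1. ring. }
    rewrite <- E. field. auto. }
  replace A with (A - 1 + 1)%C by ring. rewrite R2, HBv. field. auto.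
Qed.


Definition X (n : nat) := (- q ^ S n)%C.
Definition gt (k : nat) := ((- q) ^ k / MQ q k)%C.
Definition Pt (n : nat) := (q ^ (n * S n) / (MQ q n * MQ q (S n)))%C.
Definition Dd (n : nat) := (q ^ (n * S n) / MQ q n ^ 2)%C.
Definition ft (n : nat) := (q ^ (n * n) / MQ q n ^ 2)%C.
Definition ww (n : nat) := (q ^ (n * n) * (1 + q ^ n) / MQ q n ^ 2)%C.

Lemma X_bound n : Cmod (X n) <= rho.
Proof. unfold X. rewrite Cmod_opp. pose proof (qpow_bound (S n) 1 ltac:(lia)). rewrite pow_1 in H. auto. Qed.

Lemma Xq n : (X n * q = X (S n))%C.
Proof. unfold X. change (q ^ S (S n))%C with (q * q ^ S n)%C. ring. Qed.

Lemma phiT_X0 k : phiT (X 0) k = gt k.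
Proof. unfold phiT, gt, X, MQ. replace (q ^ 1)%C with q by (simpl; ring). reflexivity. Qed.

Lemma MQ_nz n : MQ q n <> RtoC 0.
Proof. apply MQ_neq0. auto. Qed.

Lemma iter N : forall Gv v, hsum gt Gv -> hsum (phiT (X N)) v -> Gv = (psum Pt N + Dd N * v)%C.
Proof.
  induction N; intros Gv v HG Hv.
  - simpl. unfold Dd. simpl. rewrite MQ_0. 
    apply (hsum_ext _ gt) in Hv; [|apply phiT_X0].
    rewrite (hsum_unique _ _ _ HG Hv). field.
  - destruct (phi_exists (X N) (X_bound N)) as [v0 Hv0].
    rewrite (IHN Gv v0 HG Hv0).
    assert (Hv' : hsum (phiT (X N * q)) v) by (rewrite Xq; auto).
    rewrite (phi_step (X N) v0 v (X_bound N) Hv0 Hv').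
    change (psum Pt (S N)) with (psum Pt N + Pt N)%C.
    unfold Pt, Dd, X. rewrite MQ_S.
    replace (q ^ (S N * S (S N)))%C with (q ^ (N * S N) * (q ^ S N * q ^ S N))%C.
    2:{ rewrite <- !Cpow_add. f_equal. nia. }
    pose proof (MQ_nz N). pose proof (one_plus_neq0 q hq (S N)).
    replace (1 - - q ^ S N)%C with (1 + q ^ S N)%C by ring. fld.
Qed.

Lemma gt_bound k : Cmod (gt k) <= / L * rho ^ k.
Proof. rewrite <- phiT_X0. apply phiT_bound. apply X_bound. Qed.

Lemma G_exists : exists Gv, hsum gt Gv.
Proof. apply (hsum_geom _ (/ L) rho). apply rho_ok'. apply gt_bound. Qed.

Lemma inv_sq_bound (z : C) : L <= Cmod z -> Cmod (/ z ^ 2) <= / L * / L.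
Proof.
  intros H. pose proof L_pos. assert (z <> RtoC 0). { intros E. rewrite E, Cmod_0 in H. lra. }
  replace (/ z ^ 2)%C with (/ z * / z)%C by (field; auto).
  rewrite Cmod_mult. pose proof (inv_bound z H). pose proof (Cmod_ge_0 (/ z)).
  apply Rmult_le_compat; auto.
Qed.

Lemma ft_bound k : Cmod (ft k) <= / L * / L * rho ^ k.
Proof.
  unfold ft, Cdiv. rewrite Cmod_mult. rewrite Rmult_comm.
  pose proof L_pos.
  apply Rmult_le_compat; auto using Cmod_ge_0.
  apply inv_sq_bound, MQ_lower. apply qpow_bound. nia.
Qed.

Lemma f_exists : exists fv, hsum ft fv.
Proof. apply (hsum_geom _ (/ L * / L) rho). apply rho_ok'. apply ft_bound. Qed.

Lemma G_P Gv : hsum gt Gv -> hsum Pt Gv.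
Proof.
  intros HG. pose proof rho_ok'. pose proof L_pos.
  apply (cv_dom _ _ (/ L * / L * (/ L / (1 - rho))) rho); auto.
  intros n. destruct (phi_exists (X n) (X_bound n)) as [v Hv].
  rewrite (iter n Gv v HG Hv).
  replace (psum Pt n - (psum Pt n + Dd n * v))%C with (- (Dd n * v))%C by ring.
  rewrite Cmod_opp, Cmod_mult.
  assert (HD : Cmod (Dd n) <= / L * / L * rho ^ n).
  { unfold Dd, Cdiv. rewrite Cmod_mult, Rmult_comm. apply Rmult_le_compat; auto using Cmod_ge_0.
    apply inv_sq_bound, MQ_lower. apply qpow_bound. nia. }
  assert (Hvb : Cmod v <= / L / (1 - rho)).
  { apply (hsum_bound (phiT (X n)) v (/ L) rho); auto. intros; apply phiT_bound, X_bound. }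
  replace (/ L * / L * (/ L / (1 - rho)) * rho ^ n) with ((/ L * / L * rho ^ n) * (/ L / (1 - rho))) by ring.
  apply Rmult_le_compat; auto using Cmod_ge_0.
Qed.

Lemma tele n : (ft n + Pt n = ww n - ww (S n))%C.
Proof.
  unfold ft, Pt, ww. rewrite !MQ_S.
  replace (q ^ (S n * S n))%C with (q ^ (n * n) * q ^ (S n) * q ^ n)%C
    by (rewrite <- !Cpow_add; f_equal; nia).
  replace (q ^ (n * S n))%C with (q ^ (n * n) * q ^ n)%C by (rewrite <- !Cpow_add; f_equal; nia).
  pose proof (MQ_nz n). pose proof (one_plus_neq0 q hq (S n)). rewrite (Cpow_S q n) in *. fld.
Qed.

Lemma G_f Gv fv : hsum gt Gv -> hsum ft fv -> (Gv + fv = 2)%C.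
Proof.
  intros HG Hf. pose proof rho_ok'. pose proof L_pos.
  pose proof (hsum_plus _ _ _ _ Hf (G_P Gv HG)) as H1.
  assert (H2 : hsum (fun k => ft k + Pt k)%C 2).
  { apply (cv_dom _ _ (2 * (/ L * / L)) rho); auto. intros n.
    assert (E : psum (fun k => ft k + Pt k)%C n = (2 - ww n)%C).
    { induction n. simpl. unfold ww. simpl. rewrite MQ_0. apply injective_projections; simpl; field.
      simpl. rewrite IHn, tele. ring. }
    rewrite E. replace (2 - ww n - 2)%C with (- ww n)%C by ring. rewrite Cmod_opp.
    unfold ww, Cdiv. rewrite !Cmod_mult.
    assert (Cmod (1 + q ^ n) <= 2).
    { eapply Rle_trans. apply Cmod_triangle. rewrite Cmod_1. pose proof (qpow_bound n 0 ltac:(lia)) as Hb0. simpl in Hb0. lra. }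
    pose proof (qpow_bound (n * n) n ltac:(nia)). pose proof (inv_sq_bound (MQ q n) (MQ_lower n)).
    pose proof (Cmod_ge_0 (q ^ (n * n))). pose proof (Cmod_ge_0 (1 + q ^ n)). pose proof (Cmod_ge_0 (/ MQ q n ^ 2)).
    pose proof (pow_le rho n ltac:(lra)).
    assert (0 <= / L * / L) by (apply Rmult_le_pos; left; apply Rinv_0_lt_compat; auto).
    replace (2 * (/ L * / L) * rho ^ n) with (rho ^ n * 2 * (/ L * / L)) by ring.
    apply Rmult_le_compat; auto. apply Rmult_le_pos; auto. apply Rmult_le_compat; auto. }
  rewrite Cplus_comm. apply (hsum_unique _ _ _ H1 H2).
Qed.


Definition alt (r : nat) := ((2 - K q r) * au q r * q ^ (r * r))%C.

Lemma cc_bound N r : Cmod (cc q N r) <= / L * / L.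
Proof.
  unfold cc. pose proof L_pos.
  pose proof (Q_neq0 q hq (N - r)). pose proof (Q_neq0 q hq (N + r)).
  replace (/ (Q q (N - r) * Q q (N + r)))%C with (/ Q q (N - r) * / Q q (N + r))%C by (field; auto).
  rewrite Cmod_mult. apply Rmult_le_compat; auto using Cmod_ge_0; apply inv_bound, Q_lower.
Qed.

Lemma au_bound r : Cmod (au q r) <= 2.
Proof.
  unfold au. rewrite !Cmod_mult, m1pow_mod.
  assert (Cmod (epsr r) <= 1).
  { destruct r; simpl epsr; rewrite Cmod_R, Rabs_pos_eq; lra. }
  assert (Cmod (q ^ T2 r) <= 1) by (pose proof (qpow_bound (T2 r) 0 ltac:(lia)); simpl in *; lra).
  assert (Cmod (1 + q ^ r) <= 2).
  { eapply Rle_trans. apply Cmod_triangle. rewrite Cmod_1. pose proof (qpow_bound r 0 ltac:(lia)) as Hb0. simpl in Hb0. lra. }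
  pose proof (Cmod_ge_0 (epsr r)). pose proof (Cmod_ge_0 (q ^ T2 r)). pose proof (Cmod_ge_0 (1 + q ^ r)).
  replace 2 with (1 * 1 * 1 * 2) by ring.
  repeat apply Rmult_le_compat; try lra; try apply Rmult_le_pos; try lra; apply Rmult_le_pos; lra.
Qed.

Lemma K_bound r : Cmod (K q r) <= 4 * (/ (1 - rho) * / (1 - rho)).
Proof.
  pose proof rho_ok'. unfold K, Cdiv. pose proof (one_plus_neq0 q hq r).
  replace (/ (1 + q ^ r) ^ 2)%C with (/ (1 + q ^ r) * / (1 + q ^ r))%C by (field; auto).
  rewrite !Cmod_mult. 
  replace (Cmod 4) with 4 by (rewrite Cmod_R, Rabs_pos_eq; lra).
  pose proof (onep_inv_bound r). pose proof (qpow_bound r 0 ltac:(lia)). simpl in H2.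
  pose proof (Cmod_ge_0 (q ^ r)). pose proof (Cmod_ge_0 (/ (1 + q ^ r))).
  assert (0 < / (1 - rho)) by (apply Rinv_0_lt_compat; lra).
  assert (Cmod (/ (1 + q ^ r)) * Cmod (/ (1 + q ^ r)) <= / (1 - rho) * / (1 - rho))
    by (apply Rmult_le_compat; lra).
  assert (0 <= Cmod (/ (1 + q ^ r)) * Cmod (/ (1 + q ^ r))) by (apply Rmult_le_pos; lra).
  nra.
Qed.

Definition Malt := ((2 + 4 * (/ (1 - rho) * / (1 - rho))) * 2).

Lemma alt_bound r : Cmod (alt r) <= Malt * rho ^ r.
Proof.
  unfold alt, Malt. rewrite !Cmod_mult. pose proof rho_ok'.
  assert (Cmod (2 - K q r) <= 2 + 4 * (/ (1 - rho) * / (1 - rho))).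
  { eapply Rle_trans. apply Cmod_triangle. rewrite Cmod_opp.
    replace (Cmod 2) with 2 by (rewrite Cmod_R, Rabs_pos_eq; lra). pose proof (K_bound r). lra. }
  pose proof (au_bound r). pose proof (qpow_bound (r * r) r ltac:(nia)).
  apply Rmult_le_compat; auto using Cmod_ge_0. apply Rmult_le_pos; apply Cmod_ge_0.
  apply Rmult_le_compat; auto using Cmod_ge_0.
Qed.

Lemma alt_exists : exists Av, hsum alt Av.
Proof. apply (hsum_geom _ Malt rho). apply rho_ok'. apply alt_bound. Qed.

Lemma EF N : (2 / Q q N - psum (fun j => ft j / Q q (N - j))%C (S N))%C =
  psum (fun r => alt r * cc q N r)%C (S N).
Proof.
  pose proof (Uprime q hq N) as HU. pose proof (FIN q hq N) as HF.
  transitivity (2 * psum (fun r => au q r * q ^ (r * r) * cc q N r)%C (S N) -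
     psum (fun r => K q r * au q r * q ^ (r * r) * cc q N r)%C (S N))%C.
  { rewrite HU, <- HF. unfold Cdiv. f_equal; try (apply psum_ext; intros; unfold ft, Cdiv; ring). }
  rewrite <- psum_scal, <- psum_minus. apply psum_ext. intros. unfold alt. ring.
Qed.

Lemma cv_Q_sub Qi j : cv (Q q) Qi -> cv (fun N => Q q (N - j)) Qi.
Proof. intros. apply (cv_comp (Q q) Qi (fun N => (N - j)%nat)); auto. intros M. exists (M + j)%nat. intros; lia. Qed.

Lemma main_lim Qi fv Av : cv (Q q) Qi -> hsum ft fv -> hsum alt Av -> ((2 - fv) * Qi = Av)%C.
Proof.
  intros HQ Hf HA. pose proof rho_ok'. pose proof L_pos.
  assert (HQi : Qi <> RtoC 0).
  { intros E. pose proof (cv_Cmod_lower _ _ _ HQ (Q_lower)). rewrite E, Cmod_0 in H1. lra. }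
  assert (HE : cv (fun N => 2 / Q q N - psum (fun j => ft j / Q q (N - j))%C (S N))%C (2 / Qi - fv / Qi)%C).
  { apply cv_minus. apply cv_div; auto. apply cv_const.
    apply (tannery (fun N j => ft j / Q q (N - j))%C (fun j => ft j / Qi)%C S (/ L * / L * / L) rho); auto.
    - intros k. apply cv_div; auto. apply cv_const. apply cv_Q_sub; auto.
    - intros N k. unfold Cdiv. rewrite Cmod_mult.
      replace (/ L * / L * / L * rho ^ k) with ((/ L * / L * rho ^ k) * / L) by ring.
      apply Rmult_le_compat; auto using Cmod_ge_0. apply ft_bound. apply inv_bound, Q_lower.
    - intros M. exists M. intros; lia.
    - unfold Cdiv. apply (hsum_ext (fun j => / Qi * ft j)%C). intros; ring.
      replace (fv * / Qi)%C with (/ Qi * fv)%C by ring. apply hsum_scal; auto. }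
  assert (HF : cv (fun N => psum (fun r => alt r * cc q N r)%C (S N)) (Av * / (Qi * Qi))%C).
  { apply (tannery (fun N r => alt r * cc q N r)%C (fun r => alt r * / (Qi * Qi))%C S (Malt * (/ L * / L)) rho); auto.
    - intros k. apply cv_scal. unfold cc. apply cv_inv.
      apply cv_mult. apply cv_Q_sub; auto. apply (cv_shift (Q q) Qi k); auto.
      apply (proj2 (Cmod_gt_0 _)). rewrite Cmod_mult. apply Cmod_gt_0 in HQi. nra.
    - intros N k. rewrite Cmod_mult.
      replace (Malt * (/ L * / L) * rho ^ k) with ((Malt * rho ^ k) * (/ L * / L)) by ring.
      apply Rmult_le_compat; auto using Cmod_ge_0, alt_bound, cc_bound.
    - intros M. exists M. intros; lia.
    - apply (hsum_ext (fun j => / (Qi * Qi) * alt j)%C). intros; ring.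
      replace (Av * / (Qi * Qi))%C with (/ (Qi * Qi) * Av)%C by ring. apply hsum_scal; auto. }
  assert (HE' : cv (fun N => psum (fun r => alt r * cc q N r)%C (S N)) (2 / Qi - fv / Qi)%C).
  { eapply cv_ext'. intros. apply EF. auto. }
  pose proof (cv_unique _ _ _ HE' HF) as Heq.
  apply (f_equal (fun t => t * (Qi * Qi))%C) in Heq.
  replace ((2 - fv) * Qi)%C with ((2 / Qi - fv / Qi) * (Qi * Qi))%C by (field; auto).
  rewrite Heq. field. auto.
Qed.


Definition btp (k : nat) := ((-1) ^ k * q ^ (3 * T2 (S k)) / (1 + q ^ k))%C.
Definition btn (m : nat) := ((-1) ^ (S m) * q ^ (3 * T2 (S m) + S m) / (q ^ (S m) + 1))%C.

Lemma alt_0 : alt 0 = (2 * btp 0)%C.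
Proof. unfold alt, btp, au, K, epsr. simpl. apply injective_projections; simpl; field. Qed.

Lemma alt_S m : alt (S m) = (2 * btp (S m) + 2 * btn m)%C.
Proof.
  unfold alt, btp, btn, au, K. change (epsr (S m)) with (RtoC 1).
  remember (S m) as k.
  pose proof (T2_double k).
  replace (q ^ (3 * T2 (S k)))%C with (q ^ (T2 k) * q ^ (k * k) * (q ^ k * q ^ k))%C
    by (rewrite <- !Cpow_add; f_equal; change (T2 (S k)) with (T2 k + k)%nat; nia).
  replace (q ^ (3 * T2 k + k))%C with (q ^ (T2 k) * q ^ (k * k))%C
    by (rewrite <- !Cpow_add; f_equal; nia).
  pose proof (one_plus_neq0 q hq k).
  assert ((q ^ k + 1)%C <> RtoC 0) by (rewrite Cplus_comm; auto).
  fld.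
Qed.

Lemma alt_psum N : psum alt (S N) = (2 * psum btp (S N) + 2 * psum btn N)%C.
Proof.
  induction N.
  - simpl. rewrite alt_0. ring.
  - change (psum alt (S (S N))) with (psum alt (S N) + alt (S N))%C.
    rewrite IHN, alt_S. simpl. ring.
Qed.

Lemma btp_bound k : Cmod (btp k) <= / (1 - rho) * rho ^ k.
Proof.
  unfold btp, Cdiv. rewrite !Cmod_mult, m1pow_mod, Rmult_1_l. rewrite Rmult_comm.
  apply Rmult_le_compat; auto using Cmod_ge_0. apply onep_inv_bound.
  apply qpow_bound. simpl. nia.
Qed.

Lemma btn_bound m : Cmod (btn m) <= / (1 - rho) * rho ^ m.
Proof.
  unfold btn, Cdiv. rewrite !Cmod_mult, m1pow_mod, Rmult_1_l. rewrite Rmult_comm.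
  rewrite Cplus_comm.
  apply Rmult_le_compat; auto using Cmod_ge_0. apply onep_inv_bound.
  apply qpow_bound. lia.
Qed.

Lemma btp_exists : exists v, hsum btp v.
Proof. apply (hsum_geom _ (/ (1 - rho)) rho). apply rho_ok'. apply btp_bound. Qed.
Lemma btn_exists : exists v, hsum btn v.
Proof. apply (hsum_geom _ (/ (1 - rho)) rho). apply rho_ok'. apply btn_bound. Qed.

Lemma alt_sum Av Bp Bn : hsum alt Av -> hsum btp Bp -> hsum btn Bn -> Av = (2 * (Bp + Bn))%C.
Proof.
  intros HA HP HN.
  assert (H1 : cv (fun N => psum alt (N + 1)) Av) by (apply cv_shift; auto).
  assert (H2 : cv (fun N => psum alt (N + 1)) (2 * Bp + 2 * Bn)%C).
  { eapply cv_ext'. intros N. replace (N + 1)%nat with (S N) by lia. symmetry. apply alt_psum.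
    apply cv_plus; apply cv_scal; auto.
    apply (cv_ext' (fun N => psum btp (N + 1))). intros; f_equal; lia. apply cv_shift; auto. }
  rewrite (cv_unique _ _ _ H1 H2). ring.
Qed.

Lemma core Qi Gv Bp Bn : cv (Q q) Qi -> hsum gt Gv -> hsum btp Bp -> hsum btn Bn ->
  (Gv * Qi = 2 * (Bp + Bn))%C.
Proof.
  intros HQ HG HP HN.
  destruct f_exists as [fv Hf]. destruct alt_exists as [Av HA].
  pose proof (G_f Gv fv HG Hf).
  replace Gv with (2 - fv)%C by (rewrite <- H; ring).
  rewrite (main_lim Qi fv Av HQ Hf HA). apply alt_sum; auto.
Qed.

End L.


Definition phi (z : Cplx) : C := (Defs.Re z, Defs.Im z).
Definition psi (c : C) : Cplx := Cmk (fst c) (snd c).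

Lemma phi_psi c : phi (psi c) = c. Proof. destruct c; reflexivity. Qed.
Lemma phi_inj z w : phi z = phi w -> z = w.
Proof. destruct z, w. unfold phi. simpl. intros H. inversion H. reflexivity. Qed.

Lemma phi_add z w : phi (Cadd z w) = (phi z + phi w)%C. Proof. reflexivity. Qed.
Lemma phi_opp z : phi (Defs.Copp z) = (- phi z)%C. Proof. reflexivity. Qed.
Lemma phi_sub z w : phi (Csub z w) = (phi z - phi w)%C. Proof. reflexivity. Qed.
Lemma phi_mul z w : phi (Cmul z w) = (phi z * phi w)%C. Proof. reflexivity. Qed.
Lemma phi_inv z : phi (Defs.Cinv z) = (/ phi z)%C. Proof. reflexivity. Qed.
Lemma phi_div z w : phi (Defs.Cdiv z w) = (phi z / phi w)%C. Proof. reflexivity. Qed.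
Lemma phi_one : phi Cone = RtoC 1. Proof. reflexivity. Qed.
Lemma phi_two : phi Ctwo = RtoC 2. Proof. reflexivity. Qed.
Lemma phi_zero : phi Czero = RtoC 0. Proof. reflexivity. Qed.
Lemma phi_pow z n : phi (Defs.Cpow z n) = (phi z ^ n)%C.
Proof. induction n; simpl. reflexivity. rewrite phi_mul, IHn. reflexivity. Qed.
Lemma phi_norm z : Cnorm z = Cmod (phi z). Proof. reflexivity. Qed.

Lemma phi_Cpsum f n : phi (Cpsum f n) = psum (fun k => phi (f k)) n.
Proof. induction n; simpl. reflexivity. rewrite phi_add, IHn. reflexivity. Qed.
Lemma phi_Cpprod f n : phi (Cpprod f n) = pprod (fun k => phi (f k)) n.
Proof. induction n; simpl. reflexivity. rewrite phi_mul, IHn. reflexivity. Qed.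
Lemma phi_qpoch a b n : phi (qpoch a b n) = qp (phi a) (phi b) n.
Proof.
  unfold qpoch, qp. rewrite phi_Cpprod. induction n; simpl. reflexivity.
  rewrite IHn. f_equal. rewrite phi_sub, phi_mul, phi_pow. reflexivity.
Qed.

Lemma Clim_phi u c : cv (fun n => phi (u n)) c -> phi (Clim u) = c.
Proof.
  intros H.
  assert (Hc : Ccv u (psi c)).
  { intros eps He. destruct (H eps He) as [N HN]. exists N. intros n Hn.
    rewrite phi_norm, phi_sub, phi_psi. apply HN. lia. }
  unfold Clim.
  set (l := epsilon (inhabits Czero) (fun l => Ccv u l)).
  assert (Hl : Ccv u l) by (apply (epsilon_spec (inhabits Czero) (fun l => Ccv u l)); exists (psi c); auto).
  apply (cv_unique (fun n => phi (u n))); auto.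
Qed.

Lemma Cseries_phi f c : hsum (fun k => phi (f k)) c -> phi (Cseries f) = c.
Proof.
  intros H. unfold Cseries. apply Clim_phi. eapply cv_ext'. 2: exact H.
  intros n. symmetry. apply phi_Cpsum.
Qed.

Lemma qpinf_phi a b c : cv (qp (phi a) (phi b)) c -> phi (qpoch_inf a b) = c.
Proof.
  intros H. unfold qpoch_inf. apply Clim_phi. eapply cv_ext'. 2: exact H.
  intros n. symmetry. apply phi_qpoch.
Qed.

Lemma m1_eq : (- RtoC 1)%C = RtoC (-1).
Proof. apply injective_projections; simpl; ring. Qed.

Lemma e1 k : (3 * k * (k + 1) / 2 = 3 * T2 (S k))%nat.
Proof.
  pose proof (T2_double k). change (T2 (S k)) with (T2 k + k)%nat.
  replace (3 * k * (k + 1))%nat with ((3 * (T2 k + k)) * 2)%nat by nia.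
  apply Nat.div_mul. lia.
Qed.

Lemma e2 m : (3 * S m * (S m - 1) / 2 + S m = 3 * T2 (S m) + S m)%nat.
Proof.
  f_equal. pose proof (T2_double m). change (T2 (S m)) with (T2 m + m)%nat.
  replace (3 * S m * (S m - 1))%nat with ((3 * (T2 m + m)) * 2)%nat by nia.
  apply Nat.div_mul. lia.
Qed.

Lemma btp_phi q k : phi (bil_term q (Z.of_nat k)) = btp (phi q) k.
Proof.
  unfold bil_term. rewrite (proj2 (Z.leb_le 0 (Z.of_nat k)) (Nat2Z.is_nonneg k)).
  rewrite Nat2Z.id. cbv zeta.
  rewrite phi_div, phi_mul, !phi_pow, phi_add, phi_opp, phi_one, phi_pow, m1_eq, e1.
  reflexivity.
Qed.

Lemma btn_phi q m : phi (bil_term q (- Z.of_nat (S m))) = btn (phi q) m.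
Proof.
  unfold bil_term. rewrite (proj2 (Z.leb_gt 0 (- Z.of_nat (S m))) ltac:(lia)).
  rewrite Z.opp_involutive, Nat2Z.id. cbv zeta.
  rewrite phi_div, phi_mul, !phi_pow, phi_add, phi_opp, phi_one, phi_pow, m1_eq, e2.
  reflexivity.
Qed.

Section S1.
Variable z : C.
Hypothesis hz : Cmod z < 1.

Lemma MQ_odd n : (qp (- z) (z ^ 2) (n + 1) * qp (- (z ^ 2)) (z ^ 2) n = MQ z (2 * n + 1))%C.
Proof.
  induction n.
  - simpl. unfold MQ, qp. simpl. ring.
  - replace (S n + 1)%nat with (S (n + 1)) by lia. rewrite !qp_S, <- Cpow_mul.
    replace (2 * S n + 1)%nat with (S (S (2 * n + 1))) by lia. rewrite !MQ_S.
    rewrite <- IHn. rewrite <- !Cpow_mul.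
    replace (z ^ S (S (2 * n + 1)))%C with (z * z ^ (2 * (n + 1)))%C.
    2:{ replace (S (S (2 * n + 1))) with (1 + 2 * (n + 1))%nat by lia. rewrite Cpow_add. simpl. ring. }
    replace (z ^ S (2 * n + 1))%C with (z ^ 2 * z ^ (2 * n))%C.
    2:{ rewrite <- Cpow_add. f_equal. lia. }
    ring.
Qed.

Definition ot (n : nat) := (z ^ (2 * n + 1) / MQ z (2 * n + 1))%C.
Definition aa (m : nat) := (z ^ m / MQ z m)%C.

Lemma aa_psum M : psum aa (S M) = (2 - / MQ z M)%C.
Proof.
  induction M.
  - simpl. unfold aa. rewrite MQ_0. simpl. apply injective_projections; simpl; field.
  - change (psum aa (S (S M))) with (psum aa (S M) + aa (S M))%C. rewrite IHM.
    unfold aa. rewrite MQ_S. pose proof (MQ_neq0 z hz M). pose proof (one_plus_neq0 z hz (S M)). fld.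
Qed.

Lemma gt_aa m : gt z m = ((-1) ^ m * aa m)%C.
Proof.
  unfold gt, aa. replace (- z)%C with (RtoC (-1) * z)%C by (apply injective_projections; simpl; ring).
  rewrite Cpow_mult_l. unfold Cdiv. ring.
Qed.

Lemma ot_psum N : (2 * psum ot N = psum aa (2 * N) - psum (gt z) (2 * N))%C.
Proof.
  induction N.
  - simpl. ring.
  - replace (2 * S N)%nat with (S (S (2 * N))) by lia.
    change (psum ot (S N)) with (psum ot N + ot N)%C.
    change (psum aa (S (S (2 * N)))) with (psum aa (2 * N) + aa (2 * N) + aa (S (2 * N)))%C.
    change (psum (gt z) (S (S (2 * N)))) with (psum (gt z) (2 * N) + gt z (2 * N) + gt z (S (2 * N)))%C.
    rewrite !gt_aa.
    replace ((-1) ^ (2 * N))%C with (RtoC 1).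
    2:{ rewrite Cpow_mul. replace ((-1) ^ 2)%C with (RtoC 1) by (simpl; apply injective_projections; simpl; ring).
        symmetry; apply Cpow_one. }
    replace ((-1) ^ S (2 * N))%C with (RtoC (-1)).
    2:{ rewrite Cpow_S, Cpow_mul. replace ((-1) ^ 2)%C with (RtoC 1) by (simpl; apply injective_projections; simpl; ring).
        rewrite Cpow_one. ring. }
    replace (ot N) with (aa (S (2 * N))) by (unfold ot, aa; f_equal; f_equal; lia).
    transitivity (2 * psum ot N + 2 * aa (S (2 * N)))%C. ring. rewrite IHN.
    apply injective_projections; simpl; ring.
Qed.

Lemma odd_sum MQi Gv : cv (MQ z) MQi -> hsum (gt z) Gv -> hsum ot ((2 - / MQi - Gv) / 2)%C.
Proof.
  intros HM HG.
  assert (HMi : MQi <> RtoC 0).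
  { intros E. pose proof (cv_Cmod_lower _ _ _ HM (MQ_lower z hz)). rewrite E, Cmod_0 in H.
    pose proof (L_pos z). lra. }
  unfold hsum. apply (cv_unshift _ _ 1).
  apply (cv_ext' (fun N => / 2 * ((2 - / MQ z (2 * N + 1)) - psum (gt z) (2 * N + 2)))%C).
  { intros N. pose proof (ot_psum (N + 1)) as HO.
    replace (2 * (N + 1))%nat with (S (2 * N + 1)) in HO by lia. rewrite aa_psum in HO.
    replace (S (2 * N + 1)) with (2 * N + 2)%nat in HO by lia.
    rewrite <- HO. field. }
  replace ((2 - / MQi - Gv) / 2)%C with (/ 2 * ((2 - / MQi) - Gv))%C by (unfold Cdiv; ring).
  apply cv_scal. apply cv_minus. apply cv_minus. apply cv_const.
  apply cv_inv; auto. apply (cv_comp (MQ z) MQi (fun N => 2 * N + 1)%nat); auto.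
  intros M. exists M. intros; lia.
  apply (cv_comp (psum (gt z)) Gv (fun N => 2 * N + 2)%nat); auto.
  intros M. exists M. intros; lia.
Qed.


Lemma mz2 : ((- z) ^ 2 = z ^ 2)%C. Proof. simpl. ring. Qed.

Lemma Cmod_z2 : Cmod (z ^ 2) <= Cmod z.
Proof. rewrite Cmod_pow. simpl. pose proof (Cmod_ge_0 z). nra. Qed.

Lemma Y_nz n : qp (- (z ^ 2)) (z ^ 2) n <> RtoC 0.
Proof.
  apply (qp_neq0 _ _ (Cmod z)). split; auto using Cmod_ge_0.
  rewrite Cmod_opp. apply Cmod_z2. apply Cmod_z2.
Qed.

Lemma Xn_lim Xi n : cv (qp (- (z ^ 2)) (z ^ 2)) Xi ->
  cv (qp (- ((- z) ^ (2 * n + 2))) ((- z) ^ 2)) (Xi / qp (- (z ^ 2)) (z ^ 2) n)%C.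
Proof.
  intros HX.
  apply (cv_ext' (fun m => qp (- (z ^ 2)) (z ^ 2) (n + m) / qp (- (z ^ 2)) (z ^ 2) n)%C).
  { intros m. rewrite qp_add. rewrite mz2.
    replace (- ((- z) ^ (2 * n + 2)))%C with (- z ^ 2 * (z ^ 2) ^ n)%C.
    pose proof (Y_nz n). fld.
    replace (2 * n + 2)%nat with (2 * (n + 1))%nat by lia. rewrite Cpow_mul, mz2, Cpow_add. simpl. ring. }
  apply cv_div. apply (cv_comp _ _ (fun m => n + m)%nat); auto. intros M. exists M. intros; lia.
  apply cv_const. apply Y_nz.
Qed.

Lemma term_eq n Xi : ((- z) ^ (2 * n + 1) * (Xi / qp (- (z ^ 2)) (z ^ 2) n) / qp (- z) ((- z) ^ 2) (n + 1) = - Xi * ot n)%C.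
Proof.
  rewrite mz2. unfold ot. rewrite <- (MQ_odd n).
  replace ((- z) ^ (2 * n + 1))%C with (- z ^ (2 * n + 1))%C.
  2:{ replace (- z)%C with (RtoC (-1) * z)%C by (apply injective_projections; simpl; ring).
      rewrite Cpow_mult_l.
      assert (Hm : (RtoC (-1) ^ (2 * n + 1))%C = RtoC (-1)).
      { replace (2 * n + 1)%nat with (S (2 * n)) by lia. rewrite Cpow_S, Cpow_mul.
        replace (RtoC (-1) ^ 2)%C with (RtoC 1) by (simpl; apply injective_projections; simpl; ring).
        rewrite Cpow_one. ring. }
      rewrite Hm. apply injective_projections; simpl; ring. }
  pose proof (Y_nz n). pose proof (MQ_odd n).
  assert (qp (- z) (z ^ 2) (n + 1) <> RtoC 0).
  { apply (qp_neq0 _ _ (Cmod z)). split; auto using Cmod_ge_0. rewrite Cmod_opp; lra. apply Cmod_z2. }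
  fld.
Qed.

End S1.

Theorem main_thm (q : Cplx) (hq : Cnorm q < 1) :
  F_ed_ou (Defs.Copp q) =
  Cmul (Defs.Copp (Defs.Cdiv (qpoch_inf (Defs.Copp (Defs.Cpow q 2)) (Defs.Cpow q 2)) Ctwo))
       (Csub (Csub Ctwo (Defs.Cdiv Cone (qpoch_inf (Defs.Copp q) q)))
             (Cmul (Defs.Cdiv Ctwo (qpoch_inf q q)) (Zsum (bil_term q)))).
Proof.
  apply phi_inj.
  set (z := phi q). assert (hz : Cmod z < 1) by exact hq.
  assert (Hr : 0 <= Cmod z < 1) by (split; auto using Cmod_ge_0).
  destruct (qp_cv z z (Cmod z) Hr ltac:(lra) ltac:(lra)) as [Qi [HQ HQl]].
  destruct (qp_cv (- z) z (Cmod z) Hr ltac:(rewrite Cmod_opp; lra) ltac:(lra)) as [MQi [HMQ HMQl]].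
  destruct (qp_cv (- (z ^ 2)) (z ^ 2) (Cmod z) Hr ltac:(rewrite Cmod_opp; apply (Cmod_z2 z hz)) (Cmod_z2 z hz))
    as [Xi [HX HXl]].
  destruct (G_exists z hz) as [Gv HG].
  destruct (btp_exists z hz) as [Bp HBp]. destruct (btn_exists z hz) as [Bn HBn].
  pose proof (core z hz Qi Gv Bp Bn HQ HG HBp HBn) as Hcore.
  pose proof (lowb_pos (Cmod z)) as HL.
  assert (HQi : Qi <> RtoC 0) by (intros E; rewrite E, Cmod_0 in HQl; lra).
  assert (HMQi : MQi <> RtoC 0) by (intros E; rewrite E, Cmod_0 in HMQl; lra).
  rewrite phi_mul, phi_opp, phi_div, phi_two, !phi_sub, phi_two, phi_div, phi_one, phi_mul, phi_div, phi_two.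
  rewrite (qpinf_phi _ _ Xi). 2:{ rewrite phi_opp, !phi_pow. exact HX. }
  rewrite (qpinf_phi _ _ MQi). 2:{ rewrite phi_opp. exact HMQ. }
  rewrite (qpinf_phi _ _ Qi). 2:{ exact HQ. }
  unfold Zsum. rewrite phi_add.
  rewrite (Cseries_phi _ Bp). 2:{ apply (hsum_ext (btp z)); auto. intros; symmetry; apply btp_phi. }
  rewrite (Cseries_phi _ Bn). 2:{ apply (hsum_ext (btn z)); auto. intros; symmetry; apply btn_phi. }
  unfold F_ed_ou.
  rewrite (Cseries_phi _ (- Xi * ((2 - / MQi - Gv) / 2))%C).
  2:{ apply (hsum_ext (fun n => - Xi * ot z n)%C).
      2:{ apply hsum_scal. apply odd_sum; auto. }
      intros n. rewrite phi_div, !phi_mul, !phi_pow, phi_opp, (qpinf_phi _ _ (Xi / qp (- (z ^ 2)) (z ^ 2) n)%C).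
      rewrite phi_qpoch, phi_pow, phi_opp. symmetry. apply (term_eq z hz).
      rewrite phi_opp, !phi_pow, phi_opp. apply (Xn_lim z hz); auto. }
  replace Gv with (2 * (Bp + Bn) / Qi)%C by (rewrite <- Hcore; field; auto).
  field. split; auto.
Qed.

Require Import Defs.

Theorem theorem1p1 (q : Cplx) (hq : Cnorm q < 1) :
  F_ed_ou (Copp q) =
  Cmul (Copp (Cdiv (qpoch_inf (Copp (Cpow q 2)) (Cpow q 2)) Ctwo))
       (Csub (Csub Ctwo (Cdiv Cone (qpoch_inf (Copp q) q)))
             (Cmul (Cdiv Ctwo (qpoch_inf q q)) (Zsum (bil_term q)))).
Proof. exact (main_thm q hq). Qed.
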